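(* For each $a\in(0,1)$ there is a unique $b\in(0,1)$ such that $[(a,0)]=[(0,-b^2)]$. Moreover, the map $(0,1)\to(0,1)$ sending $a$ to this $b$ is a diffeomorphism of $(0,1)$.
   Context: $\mathbb{D}$ is the open unit disc and $\mathrm{Aut}(\mathbb{D})$ its holomorphic automorphism group. $\mathbb{G}=\{(z_1+z_2,z_1z_2):z_1,z_2\in\mathbb{D}\}$. For $\varphi\in\mathrm{Aut}(\mathbb{D})$, $H_\varphi(z_1+z_2,z_1z_2)=(\varphi(z_1)+\varphi(z_2),\varphi(z_1)\varphi(z_2))$. For $(s,p)\in\mathbb{G}$, $[(s,p)]=\{H_\varphi(s,p):\varphi\in\mathrm{Aut}(\mathbb{D})\}$ is its orbit. *)

(* Defs.v *)
From Stdlib Require Import Reals.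
From Coquelicot Require Import Coquelicot.
Open Scope R_scope.

Definition inD (z : C) : Prop := Cmod z < 1.

Definition holo_on_D (f : C -> C) : Prop :=
  forall z : C, inD z -> @ex_derive C_AbsRing C_NormedModule f z.

(* Holomorphic automorphisms of D: holomorphic bijections D -> D with
   holomorphic inverse (values outside D are irrelevant). *)
Definition AutD (phi : C -> C) : Prop :=
  (forall z, inD z -> inD (phi z)) /\ holo_on_D phi /\
  exists psi : C -> C,
    (forall z, inD z -> inD (psi z)) /\ holo_on_D psi /\
    (forall z, inD z -> psi (phi z) = z) /\
    (forall z, inD z -> phi (psi z) = z).

Definition inG (x : C * C) : Prop :=
  exists z1 z2, inD z1 /\ inD z2 /\ x = (z1 + z2, z1 * z2)%C.

(* y = H_phi(x): writing x = (z1+z2, z1 z2) with z1,z2 in D,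
   y = (phi z1 + phi z2, phi z1 phi z2).  (Independent of the choice of
   z1, z2 since the formula is symmetric.) *)
Definition H_rel (phi : C -> C) (x y : C * C) : Prop :=
  exists z1 z2, inD z1 /\ inD z2 /\ x = (z1 + z2, z1 * z2)%C /\
    y = (phi z1 + phi z2, phi z1 * phi z2)%C.

Definition orbit (x : C * C) (y : C * C) : Prop :=
  exists phi, AutD phi /\ H_rel phi x y.

Definition same_orbit (x x' : C * C) : Prop :=
  forall y, orbit x y <-> orbit x' y.

Definition in01 (t : R) : Prop := 0 < t < 1.

Definition smooth_on01 (f : R -> R) : Prop :=
  forall (n : nat) (x : R), in01 x -> ex_derive_n f n x.

Definition diffeo01 (f : R -> R) : Prop :=
  (forall x, in01 x -> in01 (f x)) /\ smooth_on01 f /\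
  exists g : R -> R,
    (forall x, in01 x -> in01 (g x)) /\ smooth_on01 g /\
    (forall x, in01 x -> g (f x) = x) /\
    (forall x, in01 x -> f (g x) = x).

(* Main.v *)
Require Import Defs.
From Stdlib Require Import Reals Lra ZArith Lia.
From Coquelicot Require Import Coquelicot.
Open Scope R_scope.

Definition CD (f : C -> C) (z l : C) := forall eps, 0 < eps -> exists del, 0 < del /\
  forall w, Cmod (w - z) < del -> Cmod (f w - f z - (w - z) * l) <= eps * Cmod (w - z).

Lemma is_derive_CD f z l : @is_derive C_AbsRing C_NormedModule f z l -> CD f z l.
Proof.
  intros [_ H] eps Heps.
  specialize (H z (fun P HP => HP) (mkposreal eps Heps)).
  destruct H as [d Hd]. exists d. split. apply cond_pos.
  intros w Hw. apply (Hd w). exact Hw.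
Qed.

Lemma CD_is_derive f z l : CD f z l -> @is_derive C_AbsRing C_NormedModule f z l.
Proof.
  intros H. split. apply is_linear_scal_l.
  intros x Hx. apply (@is_filter_lim_locally_unique C_AbsRing (AbsRing_NormedModule C_AbsRing)) in Hx. subst x.
  intros [eps Heps]. destruct (H eps Heps) as [d [Hd H']].
  exists (mkposreal d Hd). intros w Hw. apply H'. exact Hw.
Qed.

Lemma normCR (x : C) : @norm R_AbsRing C_R_NormedModule x = Cmod x.
Proof.
  unfold norm; simpl. unfold prod_norm, Cmod. simpl.
  change (@norm R_AbsRing R_NormedModule (fst x)) with (Rabs (fst x)).
  change (@norm R_AbsRing R_NormedModule (snd x)) with (Rabs (snd x)).
  rewrite !Rmult_1_r, <- !Rsqr_def, <- !Rsqr_abs. reflexivity.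
Qed.

Definition RD (g : R -> C) (t : R) (l : C) := forall eps, 0 < eps -> exists del, 0 < del /\
  forall s, Rabs (s - t) < del -> Cmod (g s - g t - RtoC (s - t) * l) <= eps * Rabs (s - t).

Definition RC (g : R -> C) (t : R) := forall eps, 0 < eps -> exists del, 0 < del /\
  forall s, Rabs (s - t) < del -> Cmod (g s - g t) < eps.

Lemma RD_is_derive g t l : RD g t l -> @is_derive R_AbsRing C_R_NormedModule g t l.
Proof.
  intros H. split. apply is_linear_scal_l.
  intros x Hx. apply (@is_filter_lim_locally_unique R_AbsRing (AbsRing_NormedModule R_AbsRing)) in Hx. subst x.
  intros [eps Heps]. destruct (H eps Heps) as [d [Hd H']].
  exists (mkposreal d Hd). intros w Hw. simpl.
  rewrite normCR. rewrite scal_R_Cmult. apply H'. exact Hw.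
Qed.

Lemma RC_continuous g t : RC g t -> @continuous R_UniformSpace C_R_CompleteNormedModule g t.
Proof.
  intros H. unfold continuous.
  apply (@filterlim_locally_ball_norm R_AbsRing). apply locally_filter.
  intros [eps Heps]. destruct (H eps Heps) as [d [Hd H']].
  exists (mkposreal d Hd). intros s Hs. unfold ball_norm. rewrite normCR. apply H'. exact Hs.
Qed.

Definition CInt (g : R -> C) a b : C := @RInt C_R_CompleteNormedModule g a b.
Definition exCInt (g : R -> C) a b : Prop := @ex_RInt C_R_CompleteNormedModule g a b.

Lemma RC_exCInt g a b : (forall t, Rmin a b <= t <= Rmax a b -> RC g t) -> exCInt g a b.
Proof.
  intros H. apply ex_RInt_continuous. intros z Hz. apply RC_continuous. auto.
Qed.

Lemma CInt_Chasles g a b c : exCInt g a b -> exCInt g b c ->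
  (CInt g a b + CInt g b c)%C = CInt g a c.
Proof. intros H1 H2. unfold CInt. rewrite <- (RInt_Chasles (V:=C_R_CompleteNormedModule) g a b c H1 H2). reflexivity. Qed.

Lemma CInt_minus g h a b : exCInt g a b -> exCInt h a b ->
  CInt (fun t => g t - h t)%C a b = (CInt g a b - CInt h a b)%C.
Proof. intros H1 H2. unfold CInt. apply (RInt_minus (V:=C_R_CompleteNormedModule) g h a b H1 H2). Qed.

Lemma CInt_plus g h a b : exCInt g a b -> exCInt h a b ->
  CInt (fun t => g t + h t)%C a b = (CInt g a b + CInt h a b)%C.
Proof. intros H1 H2. unfold CInt. apply (RInt_plus (V:=C_R_CompleteNormedModule) g h a b H1 H2). Qed.

Lemma CInt_const c a b : CInt (fun _ => c) a b = (RtoC (b - a) * c)%C.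
Proof. unfold CInt. rewrite (RInt_const (V:=C_R_CompleteNormedModule)). apply scal_R_Cmult. Qed.

Lemma CInt_bound g a b M : a <= b -> exCInt g a b ->
  (forall t, a <= t <= b -> Cmod (g t) <= M) -> Cmod (CInt g a b) <= (b - a) * M.
Proof.
  intros Hab Hex HM. rewrite <- normCR.
  apply (norm_RInt_le_const (V:=C_R_NormedModule) g a b). exact Hab.
  intros x Hx. rewrite normCR. auto.
  apply (RInt_correct (V:=C_R_CompleteNormedModule)). exact Hex.
Qed.

Lemma CInt_FTC G g a b : (forall t, Rmin a b <= t <= Rmax a b -> RD G t (g t)) ->
  (forall t, Rmin a b <= t <= Rmax a b -> RC g t) -> CInt g a b = (G b - G a)%C.
Proof.
  intros HD HC. unfold CInt. apply (is_RInt_unique (V:=C_R_CompleteNormedModule)).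
  apply (is_RInt_derive (V:=C_R_CompleteNormedModule) G g a b).
  intros x Hx. apply RD_is_derive. auto.
  intros x Hx. apply RC_continuous. auto.
Qed.

Definition CC (F : C -> C) (z : C) := forall eps, 0 < eps -> exists del, 0 < del /\
  forall w, Cmod (w - z) < del -> Cmod (F w - F z) < eps.

Lemma Cmod_le_abs a b : Cmod (a, b) <= Rabs a + Rabs b.
Proof.
  unfold Cmod; simpl. rewrite <- (sqrt_Rsqr (Rabs a + Rabs b)) by (pose proof (Rabs_pos a); pose proof (Rabs_pos b); lra).
  apply sqrt_le_1_alt. unfold Rsqr. pose proof (Rabs_pos a); pose proof (Rabs_pos b).
  rewrite !Rmult_1_r. pose proof (Rsqr_abs a). pose proof (Rsqr_abs b). unfold Rsqr in *. nra.
Qed.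

Lemma Cmod_sub_tri x y z : Cmod (x - z) <= Cmod (x - y) + Cmod (y - z).
Proof. replace (x - z)%C with ((x - y) + (y - z))%C by ring. apply Cmod_triangle. Qed.

Lemma Cmod_tri3 x y z : Cmod (x + y + z) <= Cmod x + Cmod y + Cmod z.
Proof. eapply Rle_trans. apply Cmod_triangle. pose proof (Cmod_triangle x y). lra. Qed.

Lemma RC_const c t : RC (fun _ => c) t.
Proof. intros e He. exists 1. split. lra. intros s _. replace (c - c)%C with (RtoC 0) by ring. rewrite Cmod_0. lra. Qed.

Lemma RC_plus g h t : RC g t -> RC h t -> RC (fun s => g s + h s)%C t.
Proof.
  intros Hg Hh e He. destruct (Hg (e/2)) as [d1 [Hd1 H1]]. lra. destruct (Hh (e/2)) as [d2 [Hd2 H2]]. lra.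
  exists (Rmin d1 d2). split. apply Rmin_pos; lra. intros s Hs.
  assert (A1 := H1 s (Rlt_le_trans _ _ _ Hs (Rmin_l _ _))). assert (A2 := H2 s (Rlt_le_trans _ _ _ Hs (Rmin_r _ _))).
  replace (g s + h s - (g t + h t))%C with ((g s - g t) + (h s - h t))%C by ring.
  eapply Rle_lt_trans. apply Cmod_triangle. lra.
Qed.

Lemma RC_opp g t : RC g t -> RC (fun s => - g s)%C t.
Proof.
  intros Hg e He. destruct (Hg e He) as [d [Hd H]]. exists d. split. auto. intros s Hs.
  replace (- g s - - g t)%C with (- (g s - g t))%C by ring. rewrite Cmod_opp. auto.
Qed.

Lemma RC_minus g h t : RC g t -> RC h t -> RC (fun s => g s - h s)%C t.
Proof. intros. apply RC_plus; auto. apply RC_opp; auto. Qed.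

Lemma RC_mult g h t : RC g t -> RC h t -> RC (fun s => g s * h s)%C t.
Proof.
  intros Hg Hh e He.
  set (A := Cmod (g t)). set (B := Cmod (h t)).
  assert (HA : 0 <= A) by apply Cmod_ge_0. assert (HB : 0 <= B) by apply Cmod_ge_0.
  destruct (Hg (e / (2 * (B + 1)))) as [d1 [Hd1 H1]]. apply Rdiv_lt_0_compat; lra.
  destruct (Hh (Rmin 1 (e / (2 * (A + 1))))) as [d2 [Hd2 H2]]. apply Rmin_pos. lra. apply Rdiv_lt_0_compat; lra.
  exists (Rmin d1 d2). split. apply Rmin_pos; lra. intros s Hs.
  assert (A1 := H1 s (Rlt_le_trans _ _ _ Hs (Rmin_l _ _))). assert (A2 := H2 s (Rlt_le_trans _ _ _ Hs (Rmin_r _ _))).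
  replace (g s * h s - g t * h t)%C with ((g s - g t) * h s + g t * (h s - h t))%C by ring.
  eapply Rle_lt_trans. apply Cmod_triangle. rewrite !Cmod_mult.
  assert (Hhs : Cmod (h s) <= B + 1).
  { replace (h s) with ((h s - h t) + h t)%C by ring. eapply Rle_trans. apply Cmod_triangle.
    pose proof (Rmin_l 1 (e / (2 * (A + 1)))). fold B. lra. }
  assert (A2' : Cmod (h s - h t) < e / (2 * (A + 1))) by (eapply Rlt_le_trans; [exact A2| apply Rmin_r]).
  pose proof (Cmod_ge_0 (g s - g t)). pose proof (Cmod_ge_0 (h s - h t)).
  assert (X1 : Cmod (g s - g t) * Cmod (h s) <= e / (2 * (B + 1)) * (B + 1)).
  { apply Rmult_le_compat; try lra. apply Cmod_ge_0. }
  assert (X2 : A * Cmod (h s - h t) <= (A + 1) * (e / (2 * (A + 1)))).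
  { apply Rmult_le_compat; lra. }
  replace (e / (2 * (B + 1)) * (B + 1)) with (e/2) in X1 by (field; lra).
  replace ((A + 1) * (e / (2 * (A + 1)))) with (e/2) in X2 by (field; lra).
  fold A. 
  assert (A * Cmod (h s - h t) < e/2 \/ A * Cmod (h s - h t) = e/2) by lra.
  destruct (Req_dec A 0) as [HA0|HA0].
  - rewrite HA0. lra.
  - assert (A * Cmod (h s - h t) < A * (e / (2 * (A + 1)))) by (apply Rmult_lt_compat_l; lra).
    assert (A * (e / (2 * (A + 1))) <= e/2).
    { replace (A * (e / (2 * (A + 1)))) with ((e/2) * (A / (A+1))) by (field; lra).
      assert (A / (A+1) <= 1). { apply Rmult_le_reg_r with (A+1). lra. unfold Rdiv. rewrite Rmult_assoc, Rinv_l by lra. lra. }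
      nra. }
    lra.
Qed.

Lemma RC_comp F g t : CC F (g t) -> RC g t -> RC (fun s => F (g s)) t.
Proof.
  intros HF Hg e He. destruct (HF e He) as [d1 [Hd1 H1]]. destruct (Hg d1 Hd1) as [d2 [Hd2 H2]].
  exists d2. split. auto. intros s Hs. apply H1. apply H2. auto.
Qed.

Lemma RD_RC g t l : RD g t l -> RC g t.
Proof.
  intros H e He. destruct (H 1 Rlt_0_1) as [d [Hd H1]].
  exists (Rmin d (e / (Cmod l + 2))). split. apply Rmin_pos. auto. apply Rdiv_lt_0_compat. lra. pose proof (Cmod_ge_0 l); lra.
  intros s Hs. assert (Hs1 : Rabs (s - t) < d) by (eapply Rlt_le_trans; [exact Hs | apply Rmin_l]).
  assert (Hs2 : Rabs (s - t) < e / (Cmod l + 2)) by (eapply Rlt_le_trans; [exact Hs | apply Rmin_r]).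
  specialize (H1 s Hs1).
  replace (g s - g t)%C with ((g s - g t - RtoC (s - t) * l) + RtoC (s - t) * l)%C by ring.
  eapply Rle_lt_trans. apply Cmod_triangle. rewrite Cmod_mult, Cmod_R.
  pose proof (Cmod_ge_0 l). pose proof (Rabs_pos (s - t)).
  assert (Rabs (s - t) * (Cmod l + 2) < e).
  { apply Rmult_lt_reg_r with (/ (Cmod l + 2)). apply Rinv_0_lt_compat; lra.
    rewrite Rmult_assoc, Rinv_r by lra. lra. }
  nra.
Qed.

Lemma CD_CC f z l : CD f z l -> CC f z.
Proof.
  intros H e He. destruct (H 1 Rlt_0_1) as [d [Hd H1]].
  exists (Rmin d (e / (Cmod l + 2))). split. apply Rmin_pos. auto. apply Rdiv_lt_0_compat. lra. pose proof (Cmod_ge_0 l); lra.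
  intros s Hs. assert (Hs1 : Cmod (s - z) < d) by (eapply Rlt_le_trans; [exact Hs | apply Rmin_l]).
  assert (Hs2 : Cmod (s - z) < e / (Cmod l + 2)) by (eapply Rlt_le_trans; [exact Hs | apply Rmin_r]).
  specialize (H1 s Hs1).
  replace (f s - f z)%C with ((f s - f z - (s - z) * l) + (s - z) * l)%C by ring.
  eapply Rle_lt_trans. apply Cmod_triangle. rewrite Cmod_mult.
  pose proof (Cmod_ge_0 l). pose proof (Cmod_ge_0 (s - z)).
  assert (Cmod (s - z) * (Cmod l + 2) < e).
  { apply Rmult_lt_reg_r with (/ (Cmod l + 2)). apply Rinv_0_lt_compat; lra.
    rewrite Rmult_assoc, Rinv_r by lra. lra. }
  nra.
Qed.

Lemma RD_comp G g t l v : CD G (g t) l -> RD g t v -> RD (fun s => G (g s)) t (v * l)%C.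
Proof.
  intros HG Hg e He.
  set (K := Cmod v + Cmod l + 1).
  assert (HK : 0 < K) by (unfold K; pose proof (Cmod_ge_0 v); pose proof (Cmod_ge_0 l); lra).
  set (eta := Rmin 1 (e / K)).
  assert (Heta : 0 < eta) by (apply Rmin_pos; [lra | apply Rdiv_lt_0_compat; lra]).
  assert (Heta1 : eta <= 1) by apply Rmin_l.
  assert (HetaK : eta * K <= e).
  { unfold eta. assert (Rmin 1 (e / K) <= e / K) by apply Rmin_r.
    apply Rle_trans with (e / K * K). apply Rmult_le_compat_r; lra. right. field. lra. }
  destruct (HG eta Heta) as [d1 [Hd1 H1]].
  destruct (RD_RC g t v Hg d1 Hd1) as [d2 [Hd2 H2]].
  destruct (Hg eta Heta) as [d3 [Hd3 H3]].
  exists (Rmin d2 d3). split. apply Rmin_pos; lra. intros s Hs.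
  assert (A2 := H2 s (Rlt_le_trans _ _ _ Hs (Rmin_l _ _))). assert (A3 := H3 s (Rlt_le_trans _ _ _ Hs (Rmin_r _ _))).
  specialize (H1 (g s) A2).
  assert (Hgs : Cmod (g s - g t) <= (Cmod v + eta) * Rabs (s - t)).
  { replace (g s - g t)%C with ((g s - g t - RtoC (s - t) * v) + RtoC (s - t) * v)%C by ring.
    eapply Rle_trans. apply Cmod_triangle. rewrite Cmod_mult, Cmod_R. lra. }
  replace (G (g s) - G (g t) - RtoC (s - t) * (v * l))%C with
    ((G (g s) - G (g t) - (g s - g t) * l) + (g s - g t - RtoC (s - t) * v) * l)%C by ring.
  eapply Rle_trans. apply Cmod_triangle. rewrite Cmod_mult.
  pose proof (Cmod_ge_0 l). pose proof (Cmod_ge_0 v). pose proof (Rabs_pos (s - t)).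
  assert (X : Cmod (g s - g t - RtoC (s - t) * v) * Cmod l <= eta * Rabs (s - t) * Cmod l).
  { apply Rmult_le_compat_r; lra. }
  assert (Y : eta * Cmod (g s - g t) <= eta * ((Cmod v + eta) * Rabs (s - t))).
  { apply Rmult_le_compat_l; lra. }
  assert (Z : eta * ((Cmod v + eta) * Rabs (s - t)) + eta * Rabs (s - t) * Cmod l <= eta * K * Rabs (s - t)).
  { unfold K. assert (0 <= eta * Rabs (s - t) * (1 - eta)) by (apply Rmult_le_pos; [apply Rmult_le_pos|]; lra). nra. }
  assert (W : eta * K * Rabs (s - t) <= e * Rabs (s - t)) by (apply Rmult_le_compat_r; lra).
  lra.
Qed.

Lemma RD_of_components g t l :
  is_derive (fun s => fst (g s)) t (fst l) -> is_derive (fun s => snd (g s)) t (snd l) -> RD g t l.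
Proof.
  intros H1 H2 e He.
  apply is_derive_Reals in H1. apply is_derive_Reals in H2.
  destruct (H1 (e/2)) as [d1 Hd1]. lra. destruct (H2 (e/2)) as [d2 Hd2]. lra.
  exists (Rmin d1 d2). split. apply Rmin_pos; apply cond_pos. intros s Hs.
  destruct (Req_dec s t) as [Est|Nst].
  { subst s. replace (g t - g t - RtoC (t - t) * l)%C with (RtoC 0) by (rewrite Rminus_diag; ring).
    rewrite Cmod_0, Rminus_diag, Rabs_R0. lra. }
  assert (Hh : s - t <> 0) by lra.
  assert (B1 := Hd1 (s - t) Hh (Rlt_le_trans _ _ _ Hs (Rmin_l _ _))).
  assert (B2 := Hd2 (s - t) Hh (Rlt_le_trans _ _ _ Hs (Rmin_r _ _))).
  replace (t + (s - t)) with s in B1, B2 by ring.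
  assert (E1 : Rabs (fst (g s) - fst (g t) - (s - t) * fst l) <= e / 2 * Rabs (s - t)).
  { replace (fst (g s) - fst (g t) - (s - t) * fst l) with (((fst (g s) - fst (g t)) / (s - t) - fst l) * (s - t)) by (field; auto).
    rewrite Rabs_mult. apply Rmult_le_compat_r. apply Rabs_pos. lra. }
  assert (E2 : Rabs (snd (g s) - snd (g t) - (s - t) * snd l) <= e / 2 * Rabs (s - t)).
  { replace (snd (g s) - snd (g t) - (s - t) * snd l) with (((snd (g s) - snd (g t)) / (s - t) - snd l) * (s - t)) by (field; auto).
    rewrite Rabs_mult. apply Rmult_le_compat_r. apply Rabs_pos. lra. }
  destruct (g s) as [a1 a2]. destruct (g t) as [b1 b2]. destruct l as [l1 l2]. simpl in *.
  eapply Rle_trans. 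
  match goal with |- Cmod ?x <= _ => replace x with ((a1 - b1 - (s - t) * l1), (a2 - b2 - (s - t) * l2)) end.
  apply Cmod_le_abs.
  unfold Cminus, Cplus, Copp, Cmult, RtoC; simpl. f_equal; ring.
  lra.
Qed.

Definition E (th : R) : C := (cos th, sin th).
Definition P (r th : R) : C := (r * cos th, r * sin th).

Lemma P_eq r th : P r th = (RtoC r * E th)%C.
Proof. unfold P, E, RtoC, Cmult; simpl. f_equal; ring. Qed.

Lemma Cmod_E th : Cmod (E th) = 1.
Proof. unfold Cmod, E; simpl. rewrite !Rmult_1_r. rewrite <- !Rsqr_def. rewrite Rplus_comm, sin2_cos2. apply sqrt_1. Qed.

Lemma Cmod_P r th : Cmod (P r th) = Rabs r.
Proof. rewrite P_eq, Cmod_mult, Cmod_R, Cmod_E. ring. Qed.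

Lemma RD_P_th r th : RD (fun s => P r s) th (Ci * P r th)%C.
Proof.
  apply RD_of_components; simpl.
  - auto_derive. auto. ring.
  - auto_derive. auto. ring.
Qed.

Lemma RD_P_r r th : RD (fun s => P s th) r (E th).
Proof.
  apply RD_of_components; simpl.
  - auto_derive. auto. ring.
  - auto_derive. auto. ring.
Qed.

Lemma RC_P_th r th : RC (fun s => P r s) th.
Proof. eapply RD_RC. apply RD_P_th. Qed.
Lemma RC_P_r r th : RC (fun s => P s th) r.
Proof. eapply RD_RC. apply RD_P_r. Qed.
Lemma RC_E th : RC E th.
Proof. assert (H := RC_P_th 1 th). intros e He. destruct (H e He) as [d [Hd H']]. exists d. split; auto.
  intros s Hs. specialize (H' s Hs). unfold P, E in *. rewrite !Rmult_1_l in H'. exact H'. Qed.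

Lemma sin_lip x y : Rabs (sin x - sin y) <= Rabs (x - y).
Proof.
  destruct (MVT_abs sin cos y x) as [c [Hc _]].
  { intros c _. apply derivable_pt_lim_sin. }
  rewrite Hc. pose proof (COS_bound c). pose proof (Rabs_pos (x - y)).
  assert (Rabs (cos c) <= 1) by (apply Rabs_le; lra). nra.
Qed.

Lemma cos_lip x y : Rabs (cos x - cos y) <= Rabs (x - y).
Proof.
  destruct (MVT_abs cos (fun t => - sin t) y x) as [c [Hc _]].
  { intros c _. apply derivable_pt_lim_cos. }
  rewrite Hc. pose proof (SIN_bound c). pose proof (Rabs_pos (x - y)).
  assert (Rabs (- sin c) <= 1) by (rewrite Rabs_Ropp; apply Rabs_le; lra). nra.
Qed.

Lemma E_lip x y : Cmod (E x - E y) <= 2 * Rabs (x - y).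
Proof.
  unfold E. eapply Rle_trans.
  match goal with |- Cmod ?z <= _ => replace z with (cos x - cos y, sin x - sin y) end.
  apply Cmod_le_abs. unfold Cminus, Cplus, Copp; simpl. f_equal; ring.
  pose proof (sin_lip x y). pose proof (cos_lip x y). lra.
Qed.

Lemma P_lip r th r' th' : Cmod (P r th - P r' th') <= Rabs (r - r') + 2 * Rabs r' * Rabs (th - th').
Proof.
  rewrite !P_eq.
  replace (RtoC r * E th - RtoC r' * E th')%C with (RtoC (r - r') * E th + RtoC r' * (E th - E th'))%C
   by (rewrite RtoC_minus; ring).
  eapply Rle_trans. apply Cmod_triangle. rewrite !Cmod_mult, !Cmod_R, Cmod_E.
  pose proof (E_lip th th'). pose proof (Rabs_pos r'). nra.
Qed.


Definition arcI (f : C -> C) (r : R) (th : R) : C := (f (P r th) * (Ci * P r th))%C.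
Definition radI (f : C -> C) (th : R) (r : R) : C := (f (P r th) * E th)%C.
Definition arc f r t1 t2 := CInt (arcI f r) t1 t2.
Definition rad f th r1 r2 := CInt (radI f th) r1 r2.
Definition Bd f r1 r2 t1 t2 := (rad f t1 r1 r2 + arc f r2 t1 t2 - rad f t2 r1 r2 - arc f r1 t1 t2)%C.

Definition holo_ann (f : C -> C) (s r : R) := forall rho th, s <= rho <= r -> exists l, CD f (P rho th) l.

Lemma RC_arcI f r th : CC f (P r th) -> RC (arcI f r) th.
Proof.
  intros H. unfold arcI. apply RC_mult. apply (RC_comp f (fun s => P r s)). auto. apply RC_P_th.
  apply RC_mult. apply RC_const. apply RC_P_th.
Qed.

Lemma RC_radI f r th : CC f (P r th) -> RC (radI f th) r.
Proof.
  intros H. unfold radI. apply RC_mult. apply (RC_comp f (fun s => P s th)). auto. apply RC_P_r.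
  apply RC_const.
Qed.

Lemma ex_arc f s r rho t1 t2 : holo_ann f s r -> s <= rho <= r -> exCInt (arcI f rho) t1 t2.
Proof.
  intros Hf Hr. apply RC_exCInt. intros t _. apply RC_arcI.
  destruct (Hf rho t Hr) as [l Hl]. eapply CD_CC. exact Hl.
Qed.

Lemma ex_rad f s r th r1 r2 : holo_ann f s r -> s <= r1 <= r -> s <= r2 <= r -> exCInt (radI f th) r1 r2.
Proof.
  intros Hf H1 H2. apply RC_exCInt. intros t Ht. apply RC_radI.
  assert (s <= t <= r).
  { split. eapply Rle_trans. 2: apply Ht. apply Rmin_glb; lra.
    eapply Rle_trans. apply Ht. apply Rmax_lub; lra. }
  destruct (Hf t th H) as [l Hl]. eapply CD_CC. exact Hl.
Qed.

Lemma Bd_split_r f s r r1 m r2 t1 t2 : holo_ann f s r -> s <= r1 -> r1 <= m -> m <= r2 -> r2 <= r ->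
  Bd f r1 r2 t1 t2 = (Bd f r1 m t1 t2 + Bd f m r2 t1 t2)%C.
Proof.
  intros Hf H1 H2 H3 H4. unfold Bd, rad.
  rewrite <- (CInt_Chasles (radI f t1) r1 m r2) by (apply (ex_rad f s r); [exact Hf|lra|lra]).
  rewrite <- (CInt_Chasles (radI f t2) r1 m r2) by (apply (ex_rad f s r); [exact Hf|lra|lra]).
  ring.
Qed.

Lemma Bd_split_t f s r r1 r2 t1 m t2 : holo_ann f s r -> s <= r1 <= r -> s <= r2 <= r ->
  Bd f r1 r2 t1 t2 = (Bd f r1 r2 t1 m + Bd f r1 r2 m t2)%C.
Proof.
  intros Hf H1 H2. unfold Bd, arc.
  rewrite <- (CInt_Chasles (arcI f r2) t1 m t2) by (apply (ex_arc f s r); [exact Hf|lra]).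
  rewrite <- (CInt_Chasles (arcI f r1) t1 m t2) by (apply (ex_arc f s r); [exact Hf|lra]).
  ring.
Qed.

Lemma RD_ext g t l l' : RD g t l -> l = l' -> RD g t l'.
Proof. intros H <-. exact H. Qed.

Lemma CD_affine c z0 l z : CD (fun w => c + (w - z0) * l)%C z l.
Proof.
  intros e He. exists 1. split. lra. intros w _.
  replace (c + (w - z0) * l - (c + (z - z0) * l) - (w - z) * l)%C with (RtoC 0) by ring.
  rewrite Cmod_0. pose proof (Cmod_ge_0 (w - z)). nra.
Qed.

Lemma CD_quad c z0 l z : CD (fun w => c * w + (w - z0) * (w - z0) * l * / 2)%C z (c + (z - z0) * l)%C.
Proof.
  intros e He. exists (2 * e / (Cmod l + 1)). split.
  apply Rdiv_lt_0_compat. lra. pose proof (Cmod_ge_0 l). lra.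
  intros w Hw.
  replace (c * w + (w - z0) * (w - z0) * l * / 2 - (c * z + (z - z0) * (z - z0) * l * / 2) - (w - z) * (c + (z - z0) * l))%C
    with ((w - z) * (w - z) * (l * / 2))%C.
  2:{ field; intros H; inversion H; lra. }
  rewrite !Cmod_mult. rewrite Cmod_inv. 2:{ intros H. inversion H. lra. }
  rewrite Cmod_R, Rabs_right by lra.
  pose proof (Cmod_ge_0 l). pose proof (Cmod_ge_0 (w - z)).
  assert (Cmod (w - z) * (Cmod l + 1) < 2 * e).
  { apply Rmult_lt_reg_r with (/ (Cmod l + 1)). apply Rinv_0_lt_compat; lra.
    rewrite Rmult_assoc, Rinv_r by lra. unfold Rdiv in Hw. lra. }
  assert (Cmod (w - z) * Cmod (w - z) * (Cmod l * / 2) <= Cmod (w - z) * e).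
  { replace (Cmod (w - z) * Cmod (w - z) * (Cmod l * / 2)) with (Cmod (w - z) * (Cmod (w - z) * Cmod l / 2)) by (field).
    apply Rmult_le_compat_l. lra. nra. }
  lra.
Qed.

Lemma Bd_affine c z0 l r1 r2 t1 t2 : Bd (fun w => c + (w - z0) * l)%C r1 r2 t1 t2 = 0%C.
Proof.
  set (A := (fun w => c + (w - z0) * l)%C).
  set (G := (fun w => c * w + (w - z0) * (w - z0) * l * / 2)%C).
  assert (HA : forall z, CC A z) by (intros z; eapply CD_CC; apply CD_affine).
  assert (Harc : forall rho a b, arc A rho a b = (G (P rho b) - G (P rho a))%C).
  { intros rho a b. unfold arc. apply (CInt_FTC (fun th => G (P rho th))).
    - intros t _. eapply RD_ext. apply RD_comp. apply CD_quad. apply RD_P_th.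
      unfold arcI, A. ring.
    - intros t _. apply RC_arcI. apply HA. }
  assert (Hrad : forall th a b, rad A th a b = (G (P b th) - G (P a th))%C).
  { intros th a b. unfold rad. apply (CInt_FTC (fun rho => G (P rho th))).
    - intros t _. eapply RD_ext. apply RD_comp. apply CD_quad. apply RD_P_r.
      unfold radI, A. ring.
    - intros t _. apply RC_radI. apply HA. }
  unfold Bd. rewrite !Harc, !Hrad. ring.
Qed.

Lemma Cmod_sum4 a b c d : Cmod (a + b - c - d)%C <= Cmod a + Cmod b + Cmod c + Cmod d.
Proof.
  replace (a + b - c - d)%C with (a + b + (- c) + (- d))%C by ring.
  eapply Rle_trans. apply Cmod_triangle. rewrite Cmod_opp.
  pose proof (Cmod_tri3 a b (- c)). rewrite Cmod_opp in H. lra.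
Qed.

Lemma Bd_est f s r l rho0 th0 r1 r2 t1 t2 eps del :
  holo_ann f s r -> r <= 1 -> 0 <= s -> s <= r1 -> r1 <= rho0 -> rho0 <= r2 -> r2 <= r ->
  t1 <= th0 -> th0 <= t2 -> 0 <= eps ->
  (forall w, Cmod (w - P rho0 th0) < del ->
     Cmod (f w - f (P rho0 th0) - (w - P rho0 th0) * l) <= eps * Cmod (w - P rho0 th0)) ->
  (r2 - r1) + 2 * (t2 - t1) < del ->
  Cmod (Bd f r1 r2 t1 t2) <= 2 * eps * ((r2 - r1) + 2 * (t2 - t1)) ^ 2.
Proof.
  intros Hf Hr1 Hs0 Hs Hr10 H0r2 Hr2 Ht1 Ht2 He Hd HL.
  set (z0 := P rho0 th0) in *.
  set (A := (fun w => f z0 + (w - z0) * l)%C).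
  set (L := (r2 - r1) + 2 * (t2 - t1)) in *.
  assert (HL0 : 0 <= L) by (unfold L; lra).
  assert (HA : forall z, CC A z) by (intros z; eapply CD_CC; apply CD_affine).
  assert (Hpt : forall rho th, r1 <= rho <= r2 -> t1 <= th <= t2 -> Cmod (f (P rho th) - A (P rho th)) <= eps * L).
  { intros rho th Hrho Hth.
    assert (Hz : Cmod (P rho th - z0) <= L).
    { unfold z0. eapply Rle_trans. apply P_lip.
      rewrite (Rabs_right rho0) by lra.
      assert (Rabs (rho - rho0) <= r2 - r1) by (apply Rabs_le; lra).
      assert (Rabs (th - th0) <= t2 - t1) by (apply Rabs_le; lra).
      unfold L. pose proof (Rabs_pos (th - th0)). nra. }
    unfold A. replace (f (P rho th) - (f z0 + (P rho th - z0) * l))%C with (f (P rho th) - f z0 - (P rho th - z0) * l)%C by ring.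
    eapply Rle_trans. apply Hd. lra. apply Rmult_le_compat_l; lra. }
  assert (HBA := Bd_affine (f z0) z0 l r1 r2 t1 t2). fold A in HBA.
  assert (Hdiff : Bd f r1 r2 t1 t2 =
     (CInt (fun t => radI f t1 t - radI A t1 t) r1 r2 + CInt (fun t => arcI f r2 t - arcI A r2 t) t1 t2
      - CInt (fun t => radI f t2 t - radI A t2 t) r1 r2 - CInt (fun t => arcI f r1 t - arcI A r1 t) t1 t2)%C).
  { assert (EA : forall rho, exCInt (arcI A rho) t1 t2).
    { intros rho. apply RC_exCInt. intros. apply RC_arcI. apply HA. }
    assert (ER : forall th, exCInt (radI A th) r1 r2).
    { intros th. apply RC_exCInt. intros. apply RC_radI. apply HA. }
    assert (EA' : forall rho, r1 <= rho <= r2 -> exCInt (arcI f rho) t1 t2).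
    { intros rho Hrho. apply (ex_arc f s r); [exact Hf | lra]. }
    assert (ER' : forall th, exCInt (radI f th) r1 r2).
    { intros th. apply (ex_rad f s r); [exact Hf | lra | lra]. }
    rewrite (CInt_minus (radI f t1) (radI A t1)) by auto.
    rewrite (CInt_minus (radI f t2) (radI A t2)) by auto.
    rewrite (CInt_minus (arcI f r1) (arcI A r1)) by (auto; apply EA'; lra).
    rewrite (CInt_minus (arcI f r2) (arcI A r2)) by (auto; apply EA'; lra).
    transitivity (Bd f r1 r2 t1 t2 - Bd A r1 r2 t1 t2)%C. rewrite HBA. ring.
    unfold Bd, rad, arc. ring. }
  rewrite Hdiff. eapply Rle_trans. apply Cmod_sum4.
  assert (Brad : forall th, t1 <= th <= t2 -> Cmod (CInt (fun t => radI f th t - radI A th t)%C r1 r2) <= (r2 - r1) * (eps * L)).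
  { intros th Hth. apply CInt_bound. lra.
    apply RC_exCInt. intros t Ht. apply RC_minus; apply RC_radI. 
    - assert (s <= t <= r). { split. eapply Rle_trans. 2: apply Ht. apply Rmin_glb; lra.
        eapply Rle_trans. apply Ht. apply Rmax_lub; lra. }
      destruct (Hf t th H) as [l' Hl']. eapply CD_CC. exact Hl'.
    - apply HA.
    - intros t Ht. unfold radI. replace (f (P t th) * E th - A (P t th) * E th)%C with ((f (P t th) - A (P t th)) * E th)%C by ring.
      rewrite Cmod_mult, Cmod_E, Rmult_1_r. apply Hpt; lra. }
  assert (Barc : forall rho, r1 <= rho <= r2 -> Cmod (CInt (fun t => arcI f rho t - arcI A rho t)%C t1 t2) <= (t2 - t1) * (eps * L)).
  { intros rho Hrho. apply CInt_bound. lra.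
    apply RC_exCInt. intros t Ht. apply RC_minus; apply RC_arcI. 
    - destruct (Hf rho t) as [l' Hl']. lra. eapply CD_CC. exact Hl'.
    - apply HA.
    - intros t Ht. unfold arcI. replace (f (P rho t) * (Ci * P rho t) - A (P rho t) * (Ci * P rho t))%C with ((f (P rho t) - A (P rho t)) * (Ci * P rho t))%C by ring.
      rewrite !Cmod_mult, Cmod_Ci, Cmod_P, Rabs_right by lra.
      assert (Cmod (f (P rho t) - A (P rho t)) <= eps * L) by (apply Hpt; lra).
      pose proof (Cmod_ge_0 (f (P rho t) - A (P rho t))).
      assert (0 <= eps * L) by (apply Rmult_le_pos; lra). nra. }
  pose proof (Brad t1 ltac:(lra)). pose proof (Brad t2 ltac:(lra)).
  pose proof (Barc r1 ltac:(lra)). pose proof (Barc r2 ltac:(lra)).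
  assert (0 <= eps * L) by (apply Rmult_le_pos; lra).
  assert (2 * (r2 - r1) * (eps * L) + 2 * (t2 - t1) * (eps * L) <= 2 * eps * L ^ 2).
  { assert (0 <= (t2 - t1) * (eps * L)) by (apply Rmult_le_pos; lra).
    assert (E1 : 2 * eps * L ^ 2 = 2 * (r2 - r1) * (eps * L) + 4 * (t2 - t1) * (eps * L)) by (unfold L; ring).
    lra. }
  lra.
Qed.


Record rect := mkrect { QR1 : R; QR2 : R; QT1 : R; QT2 : R }.
Definition BdQ f Q := Bd f (QR1 Q) (QR2 Q) (QT1 Q) (QT2 Q).
Definition valid s r Q := s <= QR1 Q /\ QR1 Q <= QR2 Q /\ QR2 Q <= r /\ QT1 Q <= QT2 Q.
Definition q1 Q := mkrect (QR1 Q) ((QR1 Q + QR2 Q)/2) (QT1 Q) ((QT1 Q + QT2 Q)/2).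
Definition q2 Q := mkrect (QR1 Q) ((QR1 Q + QR2 Q)/2) ((QT1 Q + QT2 Q)/2) (QT2 Q).
Definition q3 Q := mkrect ((QR1 Q + QR2 Q)/2) (QR2 Q) (QT1 Q) ((QT1 Q + QT2 Q)/2).
Definition q4 Q := mkrect ((QR1 Q + QR2 Q)/2) (QR2 Q) ((QT1 Q + QT2 Q)/2) (QT2 Q).

Lemma Bd_quarters f s r Q : holo_ann f s r -> valid s r Q ->
  BdQ f Q = (BdQ f (q1 Q) + BdQ f (q2 Q) + BdQ f (q3 Q) + BdQ f (q4 Q))%C.
Proof.
  intros Hf [H1 [H2 [H3 H4]]]. unfold BdQ, q1, q2, q3, q4; simpl.
  rewrite (Bd_split_r f s r (QR1 Q) ((QR1 Q + QR2 Q)/2) (QR2 Q)) by (auto; lra).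
  rewrite (Bd_split_t f s r (QR1 Q) ((QR1 Q + QR2 Q)/2) (QT1 Q) ((QT1 Q + QT2 Q)/2) (QT2 Q)) by (auto; lra).
  rewrite (Bd_split_t f s r ((QR1 Q + QR2 Q)/2) (QR2 Q) (QT1 Q) ((QT1 Q + QT2 Q)/2) (QT2 Q)) by (auto; lra).
  ring.
Qed.

Definition choose f Q :=
  if Rle_dec (Cmod (BdQ f Q) / 4) (Cmod (BdQ f (q1 Q))) then q1 Q else
  if Rle_dec (Cmod (BdQ f Q) / 4) (Cmod (BdQ f (q2 Q))) then q2 Q else
  if Rle_dec (Cmod (BdQ f Q) / 4) (Cmod (BdQ f (q3 Q))) then q3 Q else q4 Q.

Definition geom Q Q' := QR1 Q <= QR1 Q' /\ QR2 Q' <= QR2 Q /\ QT1 Q <= QT1 Q' /\ QT2 Q' <= QT2 Q /\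
  QR2 Q' - QR1 Q' = (QR2 Q - QR1 Q) / 2 /\ QT2 Q' - QT1 Q' = (QT2 Q - QT1 Q) / 2.

Lemma choose_prop f s r Q : holo_ann f s r -> valid s r Q ->
  Cmod (BdQ f Q) <= 4 * Cmod (BdQ f (choose f Q)) /\ valid s r (choose f Q) /\ geom Q (choose f Q).
Proof.
  intros Hf HQ. pose proof (Bd_quarters f s r Q Hf HQ) as HB.
  destruct HQ as [H1 [H2 [H3 H4]]].
  assert (G : forall Q', (Q' = q1 Q \/ Q' = q2 Q \/ Q' = q3 Q \/ Q' = q4 Q) -> valid s r Q' /\ geom Q Q').
  { intros Q' HQ'. destruct HQ' as [ -> | [ -> | [ -> | -> ]]]; unfold valid, geom, q1, q2, q3, q4; simpl; lra. }
  unfold choose.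
  destruct (Rle_dec _ _). { split. lra. apply G; auto. }
  destruct (Rle_dec _ _). { split. lra. apply G; auto. }
  destruct (Rle_dec _ _). { split. lra. apply G; auto. }
  split. 2: apply G; auto.
  assert (Cmod (BdQ f Q) <= Cmod (BdQ f (q1 Q)) + Cmod (BdQ f (q2 Q)) + Cmod (BdQ f (q3 Q)) + Cmod (BdQ f (q4 Q))).
  { rewrite HB. eapply Rle_trans. apply Cmod_triangle. pose proof (Cmod_tri3 (BdQ f (q1 Q)) (BdQ f (q2 Q)) (BdQ f (q3 Q))). lra. }
  lra.
Qed.

Fixpoint qs f Q0 (n : nat) : rect := match n with O => Q0 | S n => choose f (qs f Q0 n) end.

Lemma qs_prop f s r Q0 n : holo_ann f s r -> valid s r Q0 ->
  valid s r (qs f Q0 n) /\ Cmod (BdQ f Q0) <= 4 ^ n * Cmod (BdQ f (qs f Q0 n)) /\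
  QR2 (qs f Q0 n) - QR1 (qs f Q0 n) = (QR2 Q0 - QR1 Q0) / 2 ^ n /\
  QT2 (qs f Q0 n) - QT1 (qs f Q0 n) = (QT2 Q0 - QT1 Q0) / 2 ^ n /\
  QR1 (qs f Q0 n) <= QR1 (qs f Q0 (S n)) /\ QR2 (qs f Q0 (S n)) <= QR2 (qs f Q0 n) /\
  QT1 (qs f Q0 n) <= QT1 (qs f Q0 (S n)) /\ QT2 (qs f Q0 (S n)) <= QT2 (qs f Q0 n).
Proof.
  intros Hf HQ0. induction n as [|n IH].
  - simpl. destruct (choose_prop f s r Q0 Hf HQ0) as [A [B [C1 [C2 [C3 [C4 _]]]]]].
    repeat split; try apply HQ0; try lra.
  - destruct IH as [V [Bn [Wr [Wt _]]]].
    destruct (choose_prop f s r _ Hf V) as [A [B G]].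
    destruct (choose_prop f s r _ Hf B) as [_ [_ G2]].
    destruct G as [_ [_ [_ [_ [G5 G6]]]]]. destruct G2 as [G1 [G2 [G3 [G4 _]]]].
    simpl. split. exact B. split.
    { pose proof (Cmod_ge_0 (BdQ f (choose f (qs f Q0 n)))). 
      assert (0 < 4 ^ n) by (apply pow_lt; lra). nra. }
    split. rewrite G5, Wr. field. apply pow_nonzero. lra.
    split. rewrite G6, Wt. field. apply pow_nonzero. lra.
    simpl in G1, G2, G3, G4. auto.
Qed.

Lemma nested (a b : nat -> R) : (forall n, a n <= a (S n)) -> (forall n, b (S n) <= b n) ->
  (forall n, a n <= b n) -> exists x, forall n, a n <= x <= b n.
Proof.
  intros Ha Hb Hab.
  assert (Ma : forall n m, (n <= m)%nat -> a n <= a m).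
  { intros n m Hnm. induction Hnm. lra. specialize (Ha m). lra. }
  assert (Mb : forall n m, (n <= m)%nat -> b m <= b n).
  { intros n m Hnm. induction Hnm. lra. specialize (Hb m). lra. }
  assert (Hab' : forall n m, a n <= b m).
  { intros n m. destruct (Nat.le_ge_cases n m) as [H|H].
    - specialize (Ma n m H). specialize (Hab m). lra.
    - specialize (Mb m n H). specialize (Hab n). lra. }
  destruct (completeness (fun y => exists n, y = a n)) as [x [Hx1 Hx2]].
  { exists (b O). intros y [n ->]. apply Hab'. }
  { exists (a O). exists O. auto. }
  exists x. intros n. split.
  - apply Hx1. exists n. auto.
  - apply Hx2. intros y [m ->]. apply Hab'.
Qed.

Lemma INR_lt_pow2 n : INR n < 2 ^ n.
Proof.
  induction n. simpl. lra. rewrite S_INR. simpl.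
  assert (1 <= 2 ^ n) by (apply pow_R1_Rle; lra). lra.
Qed.

Theorem goursat f s r t1 t2 : holo_ann f s r -> 0 <= s -> s <= r -> r <= 1 -> t1 <= t2 ->
  Bd f s r t1 t2 = 0%C.
Proof.
  intros Hf Hs Hsr Hr Ht.
  set (Q0 := mkrect s r t1 t2).
  assert (V0 : valid s r Q0) by (unfold valid, Q0; simpl; lra).
  set (X := Cmod (Bd f s r t1 t2)).
  destruct (Req_dec X 0) as [HX|HX]. { apply Cmod_eq_0. exact HX. }
  exfalso. assert (HXp : 0 < X) by (pose proof (Cmod_ge_0 (Bd f s r t1 t2)); unfold X in *; lra).
  destruct (nested (fun n => QR1 (qs f Q0 n)) (fun n => QR2 (qs f Q0 n))) as [rho0 Hrho0].
  { intros n. apply (qs_prop f s r Q0 n Hf V0). }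
  { intros n. apply (qs_prop f s r Q0 n Hf V0). }
  { intros n. apply (qs_prop f s r Q0 n Hf V0). }
  destruct (nested (fun n => QT1 (qs f Q0 n)) (fun n => QT2 (qs f Q0 n))) as [th0 Hth0].
  { intros n. apply (qs_prop f s r Q0 n Hf V0). }
  { intros n. apply (qs_prop f s r Q0 n Hf V0). }
  { intros n. apply (qs_prop f s r Q0 n Hf V0). }
  assert (Hrho : s <= rho0 <= r).
  { specialize (Hrho0 O). simpl in Hrho0. lra. }
  destruct (Hf rho0 th0 Hrho) as [l Hl].
  set (L0 := (r - s) + 2 * (t2 - t1)).
  assert (HL0 : 0 <= L0) by (unfold L0; lra).
  set (eps := X / (2 * L0 ^ 2 + 1)).
  assert (Heps : 0 < eps) by (unfold eps; apply Rdiv_lt_0_compat; nra).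
  destruct (Hl eps Heps) as [del [Hdel Hd]].
  destruct (archimed (L0 / del)) as [Harch _].
  set (n := Z.to_nat (up (L0 / del))).
  assert (Hn : L0 / del < 2 ^ n).
  { eapply Rlt_le_trans. exact Harch. unfold n.
    destruct (Z_lt_le_dec (up (L0 / del)) 0) as [Hneg|Hpos].
    - apply Rle_trans with 0. apply IZR_le. lia. apply pow_le. lra.
    - rewrite <- (Z2Nat.id (up (L0 / del))) at 1 by lia. rewrite <- INR_IZR_INZ. left. apply INR_lt_pow2. }
  assert (H2n : 0 < 2 ^ n) by (apply pow_lt; lra).
  destruct (qs_prop f s r Q0 n Hf V0) as [[V1 [V2 [V3 V4]]] [HB [Wr [Wt _]]]].
  simpl in Wr, Wt.
  set (Qn := qs f Q0 n) in *.
  assert (HLn : (QR2 Qn - QR1 Qn) + 2 * (QT2 Qn - QT1 Qn) = L0 / 2 ^ n).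
  { rewrite Wr, Wt. unfold L0. field. lra. }
  assert (HLd : L0 / 2 ^ n < del).
  { assert (L0 < del * 2 ^ n).
    { apply Rmult_lt_reg_r with (/ del). apply Rinv_0_lt_compat. auto.
      replace (del * 2 ^ n * / del) with (2 ^ n) by (field; lra). exact Hn. }
    apply Rmult_lt_reg_r with (2 ^ n). auto.
    replace (L0 / 2 ^ n * 2 ^ n) with L0 by (field; lra). lra. }
  assert (Hest := Bd_est f s r l rho0 th0 (QR1 Qn) (QR2 Qn) (QT1 Qn) (QT2 Qn) eps del Hf Hr Hs V1
     (proj1 (Hrho0 n)) (proj2 (Hrho0 n)) V3 (proj1 (Hth0 n)) (proj2 (Hth0 n)) (Rlt_le _ _ Heps) Hd ltac:(lra)).
  rewrite HLn in Hest. fold (BdQ f Qn) in Hest.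
  assert (Hpow : 4 ^ n = 2 ^ n * 2 ^ n). { replace 4 with (2 * 2) by ring. apply Rpow_mult_distr. }
  assert (X <= 4 ^ n * (2 * eps * (L0 / 2 ^ n) ^ 2)).
  { eapply Rle_trans. exact HB. apply Rmult_le_compat_l. apply pow_le. lra. exact Hest. }
  assert (E1 : 4 ^ n * (2 * eps * (L0 / 2 ^ n) ^ 2) = 2 * eps * L0 ^ 2).
  { rewrite Hpow. field. lra. }
  assert (E2 : 2 * eps * L0 ^ 2 < X).
  { unfold eps. apply Rmult_lt_reg_r with (2 * L0 ^ 2 + 1). nra.
    replace (2 * (X / (2 * L0 ^ 2 + 1)) * L0 ^ 2 * (2 * L0 ^ 2 + 1)) with (2 * L0 ^ 2 * X) by (field; nra).
    nra. }
  unfold X in *. lra.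
Qed.


Lemma CD_inv (w : C) : w <> 0%C -> CD Cinv w (- / (w * w))%C.
Proof.
  intros Hw e He.
  assert (Hm : 0 < Cmod w) by exact (proj1 (Cmod_gt_0 w) Hw).
  exists (Rmin (Cmod w / 2) (e * Cmod w ^ 3 / 2)). split.
  { apply Rmin_pos. lra. apply Rdiv_lt_0_compat. apply Rmult_lt_0_compat. lra. apply pow_lt. lra. lra. }
  intros v Hv.
  assert (Hv1 : Cmod (v - w) < Cmod w / 2) by (eapply Rlt_le_trans; [exact Hv| apply Rmin_l]).
  assert (Hv2 : Cmod (v - w) < e * Cmod w ^ 3 / 2) by (eapply Rlt_le_trans; [exact Hv| apply Rmin_r]).
  assert (Hvm : Cmod w / 2 <= Cmod v).
  { pose proof (Cmod_sub_tri w v 0%C). replace (w - 0)%C with w in H by ring. replace (v - 0)%C with v in H by ring.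
    replace (w - v)%C with (- (v - w))%C in H by ring. rewrite Cmod_opp in H. lra. }
  assert (Hv0 : v <> 0%C). { intros ->. rewrite Cmod_0 in Hvm. lra. }
  replace (/ v - / w - (v - w) * - / (w * w))%C with ((v - w) * (v - w) * / (v * (w * w)))%C by (field; auto).
  rewrite !Cmod_mult, Cmod_inv, !Cmod_mult. 2: { apply Cmult_neq_0; auto. apply Cmult_neq_0; auto. }
  set (d := Cmod (v - w)). pose proof (Cmod_ge_0 (v - w)). fold d in H, Hv1, Hv2.
  assert (Hden : Cmod w ^ 3 / 2 <= Cmod v * (Cmod w * Cmod w)).
  { assert (E3 : Cmod w ^ 3 / 2 = Cmod w / 2 * (Cmod w * Cmod w)) by (simpl; field). rewrite E3. apply Rmult_le_compat_r. nra. auto. }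
  assert (0 < Cmod v * (Cmod w * Cmod w)) by (apply Rmult_lt_0_compat; nra).
  apply Rmult_le_reg_r with (Cmod v * (Cmod w * Cmod w)). auto.
  rewrite Rmult_assoc, Rinv_l by lra. rewrite Rmult_1_r.
  assert (d * d <= d * (e * (Cmod w ^ 3 / 2))) by (apply Rmult_le_compat_l; lra).
  assert (d * (e * (Cmod w ^ 3 / 2)) <= e * d * (Cmod v * (Cmod w * Cmod w))).
  { replace (e * d * (Cmod v * (Cmod w * Cmod w))) with (d * e * (Cmod v * (Cmod w * Cmod w))) by ring.
    replace (d * (e * (Cmod w ^ 3 / 2))) with (d * e * (Cmod w ^ 3 / 2)) by ring.
    apply Rmult_le_compat_l. apply Rmult_le_pos; lra. auto. }
  lra.
Qed.

Lemma CD_ex_is_derive f z : (exists l, CD f z l) -> @ex_derive C_AbsRing C_NormedModule f z.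
Proof. intros [l H]. exists l. apply CD_is_derive. auto. Qed.

Lemma ex_is_derive_CD f z : @ex_derive C_AbsRing C_NormedModule f z -> exists l, CD f z l.
Proof. intros [l H]. exists l. apply is_derive_CD. auto. Qed.


Lemma is_derive_CD' f z l : @is_derive C_AbsRing (AbsRing_NormedModule C_AbsRing) f z l -> CD f z l.
Proof.
  intros [_ H] eps Heps.
  specialize (H z (fun P HP => HP) (mkposreal eps Heps)).
  destruct H as [d Hd]. exists d. split. apply cond_pos.
  intros w Hw. apply (Hd w). exact Hw.
Qed.

Lemma CD_is_derive' f z l : CD f z l -> @is_derive C_AbsRing (AbsRing_NormedModule C_AbsRing) f z l.
Proof.
  intros H. split. apply is_linear_scal_l.
  intros x Hx. apply (@is_filter_lim_locally_unique C_AbsRing (AbsRing_NormedModule C_AbsRing)) in Hx. subst x.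
  intros [eps Heps]. destruct (H eps Heps) as [d [Hd H']].
  exists (mkposreal d Hd). intros w Hw. apply H'. exact Hw.
Qed.

Lemma CD_mult f g z lf lg : CD f z lf -> CD g z lg -> CD (fun w => f w * g w)%C z (lf * g z + f z * lg)%C.
Proof.
  intros Hf Hg. apply is_derive_CD'.
  assert (H := @is_derive_mult C_AbsRing f g z lf lg (CD_is_derive' _ _ _ Hf) (CD_is_derive' _ _ _ Hg) Cmult_comm).
  exact H.
Qed.

Lemma CD_comp f g z lf lg : CD f (g z) lf -> CD g z lg -> CD (fun w => f (g w)) z (lg * lf)%C.
Proof.
  intros Hf Hg. apply is_derive_CD.
  assert (H := @is_derive_comp C_AbsRing C_NormedModule f g z lf lg (CD_is_derive _ _ _ Hf) (CD_is_derive' _ _ _ Hg)).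
  exact H.
Qed.

Lemma CD_id z : CD (fun w => w) z 1%C.
Proof. intros e He. exists 1. split. lra. intros w _. replace (w - z - (w - z) * 1)%C with (RtoC 0) by ring.
  rewrite Cmod_0. pose proof (Cmod_ge_0 (w - z)). nra. Qed.

Lemma CD_const c z : CD (fun _ => c) z 0%C.
Proof. intros e He. exists 1. split. lra. intros w _. replace (c - c - (w - z) * 0)%C with (RtoC 0) by ring.
  rewrite Cmod_0. pose proof (Cmod_ge_0 (w - z)). nra. Qed.

Lemma CD_plus f g z lf lg : CD f z lf -> CD g z lg -> CD (fun w => f w + g w)%C z (lf + lg)%C.
Proof.
  intros Hf Hg. apply is_derive_CD.
  assert (H := @is_derive_plus C_AbsRing C_NormedModule f g z lf lg (CD_is_derive _ _ _ Hf) (CD_is_derive _ _ _ Hg)).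
  exact H.
Qed.

Lemma CD_opp f z lf : CD f z lf -> CD (fun w => - f w)%C z (- lf)%C.
Proof.
  intros Hf. apply is_derive_CD.
  assert (H := @is_derive_opp C_AbsRing C_NormedModule f z lf (CD_is_derive _ _ _ Hf)).
  exact H.
Qed.

Lemma CD_unique_ex f z l l' : CD f z l -> l = l' -> CD f z l'.
Proof. intros H <-. auto. Qed.

Lemma P_neq0 r th : 0 < r -> P r th <> 0%C.
Proof. intros Hr H. assert (Cmod (P r th) = 0) by (rewrite H; apply Cmod_0). rewrite Cmod_P, Rabs_right in H0; lra. Qed.

Lemma holo_f k s r : (forall z, Cmod z < 1 -> exists l, CD k z l) -> 0 < s -> r < 1 ->
  holo_ann (fun z => k z * / (z * z))%C s r.
Proof.
  intros Hk Hs Hr rho th Hrho.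
  set (z := P rho th).
  assert (Hz : z <> 0%C) by (apply P_neq0; lra).
  assert (Hzm : Cmod z < 1) by (unfold z; rewrite Cmod_P, Rabs_right; lra).
  destruct (Hk z Hzm) as [lk Hlk].
  assert (Hzz : (z * z)%C <> 0%C) by (apply Cmult_neq_0; auto).
  assert (H1 : CD (fun w => w * w)%C z (1 * z + z * 1)%C) by (apply CD_mult; apply CD_id).
  assert (H2 := CD_comp Cinv (fun w => w * w)%C z _ _ (CD_inv (z * z)%C Hzz) H1).
  eexists. apply CD_mult. exact Hlk. exact H2.
Qed.

Lemma radI_2PI f : radI f (2 * PI) = radI f 0.
Proof. unfold radI, P, E. rewrite cos_2PI, sin_2PI, cos_0, sin_0. reflexivity. Qed.

Lemma schwarz_deriv k l0 : (forall z, Cmod z < 1 -> exists l, CD k z l) ->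
  (forall z, Cmod z < 1 -> Cmod (k z) < 1) -> k 0%C = 0%C -> CD k 0%C l0 -> Cmod l0 <= 1.
Proof.
  intros Hk HkD Hk0 Hl0.
  set (f := (fun z => k z * / (z * z))%C).
  assert (PI2 : 0 < 2 * PI) by (pose proof PI_RGT_0; lra).
  assert (Heq : forall s r, 0 < s -> s <= r -> r < 1 -> arc f r 0 (2 * PI) = arc f s 0 (2 * PI)).
  { intros s r Hs Hsr Hr.
    assert (G := goursat f s r 0 (2 * PI) (holo_f k s r Hk Hs Hr) ltac:(lra) Hsr ltac:(lra) ltac:(lra)).
    unfold Bd, rad in G. rewrite radI_2PI in G.
    apply Cminus_eq_0_rev in G || idtac.
    replace (arc f r 0 (2 * PI)) with ((CInt (radI f 0) s r + arc f r 0 (2 * PI) - CInt (radI f 0) s r - arc f s 0 (2 * PI)) + arc f s 0 (2 * PI))%C by ring.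
    rewrite G. ring. }
  assert (Hbig : forall r, 0 < r < 1 -> Cmod (arc f r 0 (2 * PI)) <= 2 * PI * / r).
  { intros r Hr. unfold arc. replace (2 * PI * / r) with ((2 * PI - 0) * / r) by ring.
    apply CInt_bound. lra. apply (ex_arc f r r). apply holo_f; auto; lra. lra.
    intros t Ht. unfold arcI, f.
    assert (Hz : P r t <> 0%C) by (apply P_neq0; lra).
    replace (k (P r t) * / (P r t * P r t) * (Ci * P r t))%C with (Ci * k (P r t) * / P r t)%C by (field; auto).
    rewrite !Cmod_mult, Cmod_inv by auto. rewrite Cmod_Ci, Cmod_P, Rabs_right by lra.
    assert (Cmod (k (P r t)) < 1) by (apply HkD; rewrite Cmod_P, Rabs_right; lra).
    pose proof (Cmod_ge_0 (k (P r t))). assert (0 < / r) by (apply Rinv_0_lt_compat; lra). nra. }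
  assert (Hsmall : forall eta, 0 < eta -> exists del, 0 < del /\ forall s, 0 < s < del -> s < 1 ->
     Cmod (arc f s 0 (2 * PI) - RtoC (2 * PI) * (Ci * l0)) <= 2 * PI * eta).
  { intros eta Heta. destruct (Hl0 eta Heta) as [del [Hdel Hd]]. exists del. split. auto.
    intros s Hs Hs1.
    replace (RtoC (2 * PI)) with (RtoC (2 * PI - 0)) by (f_equal; ring).
    rewrite <- CInt_const. unfold arc. rewrite <- CInt_minus.
    2: { apply (ex_arc f s s). apply holo_f; auto; lra. lra. }
    2: { apply RC_exCInt. intros. apply RC_const. }
    replace (2 * PI * eta) with ((2 * PI - 0) * eta) by ring.
    apply CInt_bound. lra.
    { apply RC_exCInt. intros t _. apply RC_minus. apply RC_arcI.
      destruct (holo_f k s s Hk ltac:(lra) ltac:(lra) s t ltac:(lra)) as [l' Hl']. eapply CD_CC. exact Hl'.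
      apply RC_const. }
    intros t Ht. unfold arcI, f.
    assert (Hz : P s t <> 0%C) by (apply P_neq0; lra).
    replace (k (P s t) * / (P s t * P s t) * (Ci * P s t) - Ci * l0)%C with
      (Ci * (k (P s t) - k 0%C - (P s t - 0) * l0) * / P s t)%C by (rewrite Hk0; field; auto).
    rewrite !Cmod_mult, Cmod_inv by auto. rewrite Cmod_Ci, Cmod_P, Rabs_right by lra.
    assert (Hps : Cmod (P s t - 0) = s) by (replace (P s t - 0)%C with (P s t) by ring; rewrite Cmod_P, Rabs_right; lra).
    assert (Cmod (k (P s t) - k 0%C - (P s t - 0) * l0) <= eta * s).
    { eapply Rle_trans. apply Hd. rewrite Hps; lra. rewrite Hps. lra. }
    rewrite Rmult_1_l. replace eta with (eta * s * / s) by (field; lra).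
    apply Rmult_le_compat_r. left. apply Rinv_0_lt_compat. lra. auto. }
  destruct (Rle_dec (Cmod l0) 1) as [H|H]. auto. exfalso.
  set (eta := (Cmod l0 - 1) / 3).
  assert (Heta : 0 < eta) by (unfold eta; lra).
  set (r := / (1 + eta)).
  assert (Hr : 0 < r < 1).
  { unfold r. split. apply Rinv_0_lt_compat. lra. rewrite <- Rinv_1. apply Rinv_lt_contravar; lra. }
  destruct (Hsmall eta Heta) as [del [Hdel Hd]].
  set (s := Rmin (del / 2) r).
  assert (Hs : 0 < s <= r) by (unfold s; split; [apply Rmin_pos; lra| apply Rmin_r]).
  assert (Hsd : s < del) by (unfold s; eapply Rle_lt_trans; [apply Rmin_l | lra]).
  specialize (Hd s ltac:(lra) ltac:(lra)).
  rewrite <- (Heq s r) in Hd by lra.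
  specialize (Hbig r Hr).
  assert (Cmod (RtoC (2 * PI) * (Ci * l0)) <= Cmod (arc f r 0 (2 * PI)) + 2 * PI * eta).
  { pose proof (Cmod_sub_tri (RtoC (2 * PI) * (Ci * l0))%C (arc f r 0 (2 * PI)) 0%C).
    replace (RtoC (2 * PI) * (Ci * l0) - 0)%C with (RtoC (2 * PI) * (Ci * l0))%C in H0 by ring.
    replace (arc f r 0 (2 * PI) - 0)%C with (arc f r 0 (2 * PI)) in H0 by ring.
    replace (RtoC (2 * PI) * (Ci * l0) - arc f r 0 (2 * PI))%C with (- (arc f r 0 (2 * PI) - RtoC (2 * PI) * (Ci * l0)))%C in H0 by ring.
    rewrite Cmod_opp in H0. lra. }
  rewrite !Cmod_mult, Cmod_R, Cmod_Ci, Rabs_right in H0 by lra.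
  assert (/ r = 1 + eta) by (unfold r; rewrite Rinv_inv; auto).
  rewrite H1 in Hbig.
  assert (2 * PI * Cmod l0 <= 2 * PI * (1 + 2 * eta)) by nra.
  assert (Cmod l0 <= 1 + 2 * eta) by (apply Rmult_le_reg_l with (2 * PI); lra).
  unfold eta in H3. lra.
Qed.


Definition M (a z : C) : C := ((a - z) * / (1 - Cconj a * z))%C.

Lemma Cmod_sqr (z : C) : Cmod z * Cmod z = fst z * fst z + snd z * snd z.
Proof. unfold Cmod. rewrite sqrt_sqrt. simpl; ring. simpl. nra. Qed.

Lemma Cmod_lt1_sq (z : C) : Cmod z < 1 <-> fst z * fst z + snd z * snd z < 1.
Proof.
  rewrite <- Cmod_sqr. pose proof (Cmod_ge_0 z). split; intros; nra.
Qed.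

Lemma M_key a z : Cmod (1 - Cconj a * z) * Cmod (1 - Cconj a * z) - Cmod (a - z) * Cmod (a - z)
  = (1 - Cmod a * Cmod a) * (1 - Cmod z * Cmod z).
Proof.
  rewrite !Cmod_sqr. destruct a as [a1 a2], z as [z1 z2]. unfold Cconj, Cminus, Cplus, Copp, Cmult; simpl. ring.
Qed.

Lemma M_den a z : Cmod a < 1 -> Cmod z < 1 -> (1 - Cconj a * z)%C <> 0%C.
Proof.
  intros Ha Hz H.
  assert (Cmod (1 - Cconj a * z) = 0) by (rewrite H; apply Cmod_0).
  assert (Cmod (Cconj a * z) < 1).
  { rewrite Cmod_mult, Cmod_conj. pose proof (Cmod_ge_0 a). pose proof (Cmod_ge_0 z). nra. }
  replace (Cconj a * z)%C with (1 - (1 - Cconj a * z))%C in H1 by ring. rewrite H in H1.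
  replace (1 - 0)%C with (RtoC 1) in H1 by ring. rewrite Cmod_1 in H1. lra.
Qed.

Lemma M_inD a z : Cmod a < 1 -> Cmod z < 1 -> Cmod (M a z) < 1.
Proof.
  intros Ha Hz. unfold M. rewrite Cmod_mult, Cmod_inv by (apply M_den; auto).
  pose proof (M_key a z). pose proof (Cmod_ge_0 a). pose proof (Cmod_ge_0 z).
  assert (Hd : 0 < Cmod (1 - Cconj a * z)) by (apply Cmod_gt_0; apply M_den; auto).
  assert (Cmod (a - z) * Cmod (a - z) < Cmod (1 - Cconj a * z) * Cmod (1 - Cconj a * z)).
  { assert (0 < (1 - Cmod a * Cmod a) * (1 - Cmod z * Cmod z)) by (apply Rmult_lt_0_compat; nra). lra. }
  pose proof (Cmod_ge_0 (a - z)).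
  apply Rmult_lt_reg_r with (Cmod (1 - Cconj a * z)). auto.
  rewrite Rmult_assoc, Rinv_l by lra. rewrite Rmult_1_l, Rmult_1_r.
  nra.
Qed.

Lemma conj_mul_self (a : C) : (Cconj a * a)%C = RtoC (Cmod a * Cmod a).
Proof. rewrite Cmod_sqr. destruct a as [a1 a2]. unfold Cconj, Cmult, RtoC; simpl. f_equal; ring. Qed.

Lemma one_minus_aa a : Cmod a < 1 -> (1 - Cconj a * a)%C <> 0%C.
Proof.
  intros Ha H. rewrite conj_mul_self in H. pose proof (Cmod_ge_0 a).
  apply (f_equal fst) in H. simpl in H. nra.
Qed.

Lemma M_invol a z : Cmod a < 1 -> Cmod z < 1 -> M a (M a z) = z.
Proof.
  intros Ha Hz. unfold M.
  assert (HD := M_den a z Ha Hz). assert (HA := one_minus_aa a Ha).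
  assert (H2 : (1 - Cconj a * ((a - z) * / (1 - Cconj a * z)))%C = ((1 - Cconj a * a) * / (1 - Cconj a * z))%C)
    by (field; auto).
  rewrite H2. field. split; auto. 
Qed.

Lemma M_0 a : M a 0%C = a.
Proof. unfold M. replace (1 - Cconj a * 0)%C with (RtoC 1) by ring. field. Qed.

Lemma M_self a : M a a = 0%C.
Proof. unfold M. replace (a - a)%C with (RtoC 0) by ring. ring. Qed.

Definition Mp (a z : C) : C := ((Cconj a * a - 1) * / ((1 - Cconj a * z) * (1 - Cconj a * z)))%C.

Lemma CD_M a z : Cmod a < 1 -> Cmod z < 1 -> CD (M a) z (Mp a z).
Proof.
  intros Ha Hz. assert (HD := M_den a z Ha Hz).
  assert (H1 : CD (fun w => a - w)%C z (0 + - (1))%C).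
  { apply (CD_plus (fun _ => a) (fun w => - w)%C). apply CD_const. apply CD_opp. apply CD_id. }
  assert (H2 : CD (fun w => 1 - Cconj a * w)%C z (0 + - (0 * z + Cconj a * 1))%C).
  { apply (CD_plus (fun _ => 1%C) (fun w => - (Cconj a * w))%C). apply CD_const. apply CD_opp.
    apply (CD_mult (fun _ => Cconj a) (fun w => w)). apply CD_const. apply CD_id. }
  assert (H3 := CD_comp Cinv (fun w => 1 - Cconj a * w)%C z _ _ (CD_inv _ HD) H2).
  assert (H4 := CD_mult _ _ z _ _ H1 H3).
  eapply CD_unique_ex. exact H4.
  unfold Mp. field. auto.
Qed.

Lemma Mp_0 a : Mp a 0%C = (Cconj a * a - 1)%C.
Proof. unfold Mp. replace (1 - Cconj a * 0)%C with (RtoC 1) by ring. field. Qed.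

Lemma Mp_self a : Cmod a < 1 -> Mp a a = (/ (Cconj a * a - 1))%C.
Proof.
  intros Ha. assert (HA := one_minus_aa a Ha). unfold Mp.
  assert (HA' : (Cconj a * a - 1)%C <> 0%C). { intros H. apply HA. replace (1 - Cconj a * a)%C with (- (Cconj a * a - 1))%C by ring. rewrite H. ring. }
  field. split; auto.
Qed.

Lemma holo_CD f : holo_on_D f -> forall z, Cmod z < 1 -> exists l, CD f z l.
Proof. intros H z Hz. apply ex_is_derive_CD. apply H. exact Hz. Qed.

Lemma CD_holo f : (forall z, Cmod z < 1 -> exists l, CD f z l) -> holo_on_D f.
Proof. intros H z Hz. apply CD_ex_is_derive. apply H. exact Hz. Qed.

Lemma AutD_M a : Cmod a < 1 -> AutD (M a).
Proof.
  intros Ha.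
  assert (Hh : holo_on_D (M a)) by (apply CD_holo; intros z Hz; eexists; apply CD_M; auto).
  split. intros z Hz. apply M_inD; auto. split. auto.
  exists (M a). split. intros z Hz. apply M_inD; auto. split. auto.
  split; intros z Hz; apply M_invol; auto.
Qed.

Lemma AutD_comp phi chi : AutD phi -> AutD chi -> AutD (fun z => phi (chi z)).
Proof.
  intros [Hp1 [Hp2 [psi [Hq1 [Hq2 [Hq3 Hq4]]]]]] [Hc1 [Hc2 [xi [Hx1 [Hx2 [Hx3 Hx4]]]]]].
  split. intros z Hz. auto. split.
  { apply CD_holo. intros z Hz. destruct (holo_CD chi Hc2 z Hz) as [l1 H1].
    destruct (holo_CD phi Hp2 (chi z) (Hc1 z Hz)) as [l2 H2]. eexists. apply CD_comp; eauto. }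
  exists (fun z => xi (psi z)). split. intros z Hz. auto. split.
  { apply CD_holo. intros z Hz. destruct (holo_CD psi Hq2 z Hz) as [l1 H1].
    destruct (holo_CD xi Hx2 (psi z) (Hq1 z Hz)) as [l2 H2]. eexists. apply CD_comp; eauto. }
  split; intros z Hz.
  - rewrite Hq3 by auto. auto.
  - rewrite Hx4 by auto. auto.
Qed.

Lemma AutD_inv phi : AutD phi -> exists psi, AutD psi /\ (forall z, inD z -> psi (phi z) = z) /\ (forall z, inD z -> phi (psi z) = z).
Proof.
  intros [Hp1 [Hp2 [psi [Hq1 [Hq2 [Hq3 Hq4]]]]]].
  exists psi. split. split. auto. split. auto. exists phi. repeat split; auto. split; auto.
Qed.

Lemma AutD_id : AutD (fun z => z).
Proof.
  split. auto. split. apply CD_holo. intros. eexists. apply CD_id.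
  exists (fun z => z). split. auto. split. apply CD_holo. intros. eexists. apply CD_id. split; auto.
Qed.

Lemma Cmod_aa1 a : Cmod a < 1 -> Cmod (Cconj a * a - 1)%C = 1 - Cmod a * Cmod a.
Proof.
  intros Ha. rewrite conj_mul_self. replace (RtoC (Cmod a * Cmod a) - 1)%C with (RtoC (- (1 - Cmod a * Cmod a))).
  rewrite Cmod_R, Rabs_Ropp, Rabs_right. auto. pose proof (Cmod_ge_0 a). nra.
  unfold RtoC, Cminus, Cplus, Copp; simpl. f_equal; ring.
Qed.

Lemma SP_inf chi z0 l : AutD chi -> Cmod z0 < 1 -> CD chi z0 l ->
  Cmod l * (1 - Cmod z0 * Cmod z0) <= 1 - Cmod (chi z0) * Cmod (chi z0).
Proof.
  intros Hchi Hz0 Hl.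
  destruct Hchi as [Hc1 [Hc2 _]].
  set (w0 := chi z0).
  assert (Hw0 : Cmod w0 < 1) by (apply Hc1; auto).
  set (k := fun z => M w0 (chi (M z0 z))).
  assert (Hk : forall z, Cmod z < 1 -> exists l, CD k z l).
  { intros z Hz. assert (HM := CD_M z0 z Hz0 Hz).
    assert (HMz : Cmod (M z0 z) < 1) by (apply M_inD; auto).
    destruct (holo_CD chi Hc2 _ HMz) as [l1 H1].
    assert (HcD : Cmod (chi (M z0 z)) < 1) by (apply Hc1; auto).
    assert (HM2 := CD_M w0 (chi (M z0 z)) Hw0 HcD).
    eexists. unfold k. apply (CD_comp (M w0) (fun z => chi (M z0 z))). exact HM2.
    apply (CD_comp chi (M z0)). exact H1. exact HM. }
  assert (HkD : forall z, Cmod z < 1 -> Cmod (k z) < 1).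
  { intros z Hz. unfold k. apply M_inD. auto. apply Hc1. apply M_inD; auto. }
  assert (Hk0 : k 0%C = 0%C) by (unfold k; rewrite M_0; apply M_self).
  assert (HL : CD k 0%C ((Mp z0 0 * l) * Mp w0 w0)%C).
  { unfold k. apply (CD_comp (M w0) (fun z => chi (M z0 z))).
    rewrite M_0. apply CD_M; auto.
    apply (CD_comp chi (M z0)). rewrite M_0. exact Hl. apply CD_M; auto. rewrite Cmod_0; lra. }
  assert (HS := schwarz_deriv k _ Hk HkD Hk0 HL).
  rewrite !Cmod_mult, Mp_0, Mp_self, Cmod_inv, !Cmod_aa1 in HS by (auto; intros H; apply (one_minus_aa w0 Hw0); 
     replace (1 - Cconj w0 * w0)%C with (- (Cconj w0 * w0 - 1))%C by ring; rewrite H; ring).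
  pose proof (Cmod_ge_0 w0). pose proof (Cmod_ge_0 z0). pose proof (Cmod_ge_0 l).
  assert (Hp : 0 < 1 - Cmod w0 * Cmod w0) by nra.
  apply Rmult_le_reg_r with (/ (1 - Cmod w0 * Cmod w0)). apply Rinv_0_lt_compat. auto.
  rewrite Rinv_r by lra. fold w0. lra.
Qed.


Lemma RD_comp_gen (h : C -> R) g t l : (forall z, Rabs (h z) <= Cmod z) -> (forall x y, h (x - y)%C = h x - h y) ->
  (forall (r : R) (z : C), h (RtoC r * z)%C = r * h z) ->
  RD g t l -> is_derive (fun s => h (g s)) t (h l).
Proof.
  intros Hh Hlin Hsc H. apply is_derive_Reals. intros e He.
  destruct (H (e/2)) as [d [Hd H']]. lra.
  exists (mkposreal d Hd). intros k Hk0 Hk. simpl in Hk.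
  specialize (H' (t + k)). replace (t + k - t) with k in H' by ring. specialize (H' Hk).
  assert (E1 : (h (g (t + k)) - h (g t)) / k - h l = h (Cminus (Cminus (g (t + k)) (g t)) (Cmult (RtoC k) l)) / k).
  { rewrite !Hlin, Hsc. field. auto. }
  rewrite E1. unfold Rdiv. rewrite Rabs_mult, Rabs_inv.
  assert (0 < Rabs k) by (apply Rabs_pos_lt; auto).
  apply Rle_lt_trans with (e / 2 * Rabs k * / Rabs k).
  apply Rmult_le_compat_r. left. apply Rinv_0_lt_compat. auto.
  eapply Rle_trans. apply Hh. auto.
  replace (e / 2 * Rabs k * / Rabs k) with (e/2) by (field; lra). lra.
Qed.

Lemma RD_fst g t l : RD g t l -> is_derive (fun s => fst (g s)) t (fst l).
Proof.
  apply (RD_comp_gen fst).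
  - intros [x y]. simpl. eapply Rle_trans. apply Rmax_l. apply (Rmax_Cmod (x, y)).
  - intros [] []. simpl. ring.
  - intros r []. simpl. ring.
Qed.

Lemma RD_snd g t l : RD g t l -> is_derive (fun s => snd (g s)) t (snd l).
Proof.
  apply (RD_comp_gen snd).
  - intros [x y]. simpl. eapply Rle_trans. apply Rmax_r. apply (Rmax_Cmod (x, y)).
  - intros [] []. simpl. ring.
  - intros r []. simpl. ring.
Qed.

Lemma RD_lin c t : RD (fun s => RtoC (s * c)) t (RtoC c).
Proof.
  apply RD_of_components; simpl. auto_derive. auto. ring. auto_derive. auto. ring.
Qed.

Lemma Cmod_deriv g t l : RD g t l -> g t <> 0%C ->
  is_derive (fun s => Cmod (g s)) t ((fst (g t) * fst l + snd (g t) * snd l) / Cmod (g t)).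
Proof.
  intros H Hn.
  assert (Hp : 0 < fst (g t) ^ 2 + snd (g t) ^ 2).
  { destruct (g t) as [x y]. simpl. destruct (Req_dec x 0), (Req_dec y 0).
    subst. exfalso; apply Hn; reflexivity. all: nra. }
  assert (H1 := RD_fst g t l H). assert (H2 := RD_snd g t l H).
  assert (H3 : is_derive (fun s => fst (g s) ^ 2 + snd (g s) ^ 2) t (2 * fst (g t) * fst l + 2 * snd (g t) * snd l)).
  { apply (is_derive_ext (fun s => fst (g s) * fst (g s) + snd (g s) * snd (g s))).
    { intros s. simpl. ring. }
    replace (2 * fst (g t) * fst l + 2 * snd (g t) * snd l) with
      ((fst l * fst (g t) + fst (g t) * fst l) + (snd l * snd (g t) + snd (g t) * snd l)) by ring.
    apply (@is_derive_plus R_AbsRing R_NormedModule); apply Derive.is_derive_mult; auto. }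
  assert (H4 := is_derive_sqrt _ _ _ H3 Hp).
  unfold Cmod. replace ((fst (g t) * fst l + snd (g t) * snd l) / sqrt (fst (g t) ^ 2 + snd (g t) ^ 2))
     with ((2 * fst (g t) * fst l + 2 * snd (g t) * snd l) / (2 * sqrt (fst (g t) ^ 2 + snd (g t) ^ 2))).
  exact H4. field. apply Rgt_not_eq. apply sqrt_lt_R0. auto.
Qed.

Lemma ln_le_lin y : 0 < y -> ln y <= y - 1.
Proof. intros Hy. pose proof (exp_ineq1_le (ln y)). rewrite exp_ln in H by auto. lra. Qed.

Lemma CS_ineq (z v : C) : z <> 0%C -> (fst z * fst v + snd z * snd v) / Cmod z <= Cmod v.
Proof.
  intros Hz. assert (Hm : 0 < Cmod z) by (apply Cmod_gt_0; auto).
  apply Rmult_le_reg_r with (Cmod z). auto.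
  unfold Rdiv. rewrite Rmult_assoc, Rinv_l, Rmult_1_r by lra.
  pose proof (Cmod_sqr z). pose proof (Cmod_sqr v). pose proof (Cmod_ge_0 v).
  set (X := fst z * fst v + snd z * snd v).
  assert (X * X <= (Cmod v * Cmod z) * (Cmod v * Cmod z)).
  { replace ((Cmod v * Cmod z) * (Cmod v * Cmod z)) with ((Cmod z * Cmod z) * (Cmod v * Cmod v)) by ring.
    rewrite H, H0. unfold X. 
    assert (0 <= (fst z * snd v - snd z * fst v) ^ 2) by apply pow2_ge_0. nra. }
  assert (0 <= Cmod v * Cmod z) by nra. nra.
Qed.

Lemma schwarz_aut psi c : AutD psi -> psi 0%C = 0%C -> 0 < c < 1 -> Cmod (psi (RtoC c)) <= c.
Proof.
  intros Haut H0 Hc.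
  pose proof Haut as HA. destruct HA as [H1 [H2 [xi [Hx1 [_ [Hx3 _]]]]]].
  set (d := fun z => C_derive psi z).
  assert (HD : forall z, Cmod z < 1 -> CD psi z (d z)).
  { intros z Hz. apply is_derive_CD. apply (C_derive_correct psi z z). apply H2. exact Hz. }
  assert (Hbnd : forall z, Cmod z < 1 -> Cmod (d z) * (1 - Cmod z * Cmod z) <= 1 - Cmod (psi z) * Cmod (psi z)).
  { intros z Hz. apply SP_inf; auto. }
  assert (Hinj : forall z, Cmod z < 1 -> psi z = 0%C -> z = 0%C).
  { intros z Hz Hp. rewrite <- (Hx3 z Hz), <- (Hx3 0%C). rewrite Hp, H0. auto.
    unfold inD. rewrite Cmod_0. lra. }
  assert (Htc_all : forall t, 0 < t <= 1 -> 0 < t * c < 1).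
  { intros t Ht. split; [apply Rmult_lt_0_compat; lra | apply Rle_lt_trans with (1 * c); [apply Rmult_le_compat_r; lra | lra]]. }
  set (w := fun t => psi (RtoC (t * c))).
  set (w' := fun t => (RtoC c * d (RtoC (t * c)))%C).
  assert (Hw : forall t, Rabs (t * c) < 1 -> RD w t (w' t)).
  { intros t Ht. unfold w, w'. apply (RD_comp psi (fun s => RtoC (s * c))).
    apply HD. rewrite Cmod_R. auto. apply RD_lin. }
  set (U := fun t => Cmod (w t)).
  assert (Hw0 : forall t, 0 < t <= 1 -> w t <> 0%C).
  { intros t Ht Hwt. apply Hinj in Hwt. apply (f_equal fst) in Hwt. simpl in Hwt. nra.
    rewrite Cmod_R. rewrite Rabs_right by nra. nra. }
  set (dU := fun t => (fst (w t) * fst (w' t) + snd (w t) * snd (w' t)) / U t).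
  assert (HU : forall t, 0 < t <= 1 -> is_derive U t (dU t)).
  { intros t Ht. apply Cmod_deriv. apply Hw. rewrite Rabs_right by nra. nra. auto. }
  assert (HU1 : forall t, 0 < t <= 1 -> 0 < U t < 1).
  { intros t Ht. split. apply Cmod_gt_0. auto. apply H1. unfold inD. rewrite Cmod_R, Rabs_right by nra. nra. }
  assert (HdU : forall t, 0 < t <= 1 -> dU t * (1 - t * c * (t * c)) <= c * (1 - U t * U t)).
  { intros t Ht. assert (A := CS_ineq (w t) (w' t) (Hw0 t Ht)). fold (U t) in A. fold (dU t) in A.
    assert (B := Hbnd (RtoC (t * c))). rewrite Cmod_R, Rabs_right in B by nra.
    specialize (B ltac:(nra)). fold (w t) in B. fold (U t) in B.
    unfold w' in A. rewrite Cmod_mult, Cmod_R, Rabs_right in A by lra.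
    assert (Htc : 0 < t * c < 1) by (split; [apply Rmult_lt_0_compat; lra | apply Rle_lt_trans with (1 * c); [apply Rmult_le_compat_r; lra | lra]]).
    assert (0 < 1 - t * c * (t * c)) by nra.
    assert (dU t * (1 - t * c * (t * c)) <= c * Cmod (d (RtoC (t * c))) * (1 - t * c * (t * c))) by (apply Rmult_le_compat_r; lra).
    assert (c * (Cmod (d (RtoC (t * c))) * (1 - t * c * (t * c))) <= c * (1 - U t * U t)) by (apply Rmult_le_compat_l; [lra | exact B]).
    lra. }
  set (Df := fun t => ln (1 + U t) - ln (1 - U t) - (ln (1 + t * c) - ln (1 - t * c))).
  set (dD := fun t => dU t / (1 + U t) + dU t / (1 - U t) - (c / (1 + t * c) + c / (1 - t * c))).
  assert (HDd : forall t, 0 < t <= 1 -> is_derive Df t (dD t)).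
  { intros t Ht. assert (HUt := HU t Ht). specialize (HU1 t Ht). specialize (Htc_all t Ht).
    unfold Df, dD. auto_derive.
    - repeat split; try (exists (dU t); exact HUt); nra.
    - replace (Derive (fun x => U x) t) with (dU t) by (symmetry; apply is_derive_unique; exact HUt). field. split; nra. }
  assert (HdD : forall t, 0 < t <= 1 -> dD t <= 0).
  { intros t Ht. specialize (HdU t Ht). specialize (HU1 t Ht). specialize (Htc_all t Ht). unfold dD.
    assert (E1 : dU t / (1 + U t) + dU t / (1 - U t) = 2 * dU t / (1 - U t * U t)) by (field; nra).
    assert (E2 : c / (1 + t * c) + c / (1 - t * c) = 2 * c / (1 - t * c * (t * c))) by (field; nra).
    rewrite E1, E2.
    assert (0 < 1 - U t * U t) by nra. assert (0 < 1 - t * c * (t * c)) by nra.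
    apply Rle_minus. unfold Rdiv.
    apply Rmult_le_reg_r with ((1 - U t * U t) * (1 - t * c * (t * c))). nra.
    replace (2 * dU t * / (1 - U t * U t) * ((1 - U t * U t) * (1 - t * c * (t * c)))) with (2 * (dU t * (1 - t * c * (t * c)))) by (field; nra).
    replace (2 * c * / (1 - t * c * (t * c)) * ((1 - U t * U t) * (1 - t * c * (t * c)))) with (2 * (c * (1 - U t * U t))) by (field; nra).
    lra. }
  assert (Hmono : forall e, 0 < e < 1 -> Df 1 <= Df e).
  { intros e He. destruct (MVT_gen Df e 1 dD) as [x [Hx Hmvt]].
    - intros x Hx. rewrite Rmin_left, Rmax_right in Hx by lra. apply HDd. lra.
    - intros x Hx. rewrite Rmin_left, Rmax_right in Hx by lra. apply continuity_pt_filterlim.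
      apply (ex_derive_continuous (K:=R_AbsRing) (V:=R_NormedModule)). exists (dD x). apply HDd. lra.
    - rewrite Rmin_left, Rmax_right in Hx by lra. assert (dD x <= 0) by (apply HdD; lra).
      assert (dD x * (1 - e) <= 0) by (apply Rmult_le_0_r; lra). lra. }
  assert (HRC : RC w 0).
  { eapply RD_RC. apply Hw. rewrite Rmult_0_l, Rabs_R0. lra. }
  assert (Hw00 : w 0 = 0%C) by (unfold w; rewrite Rmult_0_l; exact H0).
  assert (Hsmall : forall eta, 0 < eta -> Df 1 < eta).
  { intros eta Heta.
    destruct (HRC (Rmin (1/2) (eta / 4))) as [del [Hdel Hd]]. apply Rmin_pos; lra.
    set (e := Rmin (del / 2) (1 / 2)).
    assert (He : 0 < e < 1) by (unfold e; split; [apply Rmin_pos; lra | eapply Rle_lt_trans; [apply Rmin_r| lra]]).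
    assert (Hed : Rabs (e - 0) < del) by (rewrite Rminus_0_r, Rabs_right by lra; unfold e; eapply Rle_lt_trans; [apply Rmin_l|lra]).
    specialize (Hd e Hed). rewrite Hw00 in Hd. replace (w e - 0)%C with (w e) in Hd by ring. fold (U e) in Hd.
    assert (HUe : U e < 1/2 /\ U e < eta / 4).
    { split; eapply Rlt_le_trans; try exact Hd; [apply Rmin_l | apply Rmin_r]. }
    specialize (Hmono e He). specialize (HU1 e ltac:(lra)).
    assert (L1 : ln (1 - e * c) <= ln (1 + e * c)).
    { left. apply ln_increasing; nra. }
    assert (L2 : ln (1 + U e) - ln (1 - U e) <= 2 * U e / (1 - U e)).
    { rewrite <- ln_div by lra. eapply Rle_trans. apply ln_le_lin. apply Rdiv_lt_0_compat; lra.
      right. field. lra. }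
    assert (L3 : 2 * U e / (1 - U e) <= 4 * U e).
    { apply Rmult_le_reg_r with (1 - U e). lra. unfold Rdiv. rewrite Rmult_assoc, Rinv_l by lra. nra. }
    unfold Df at 2 in Hmono. lra. }
  assert (HD1 : Df 1 <= 0).
  { destruct (Rle_dec (Df 1) 0). auto. exfalso. specialize (Hsmall (Df 1) ltac:(lra)). lra. }
  unfold Df in HD1. specialize (HU1 1 ltac:(lra)).
  assert (HU1c : U 1 = Cmod (psi (RtoC c))) by (unfold U, w; rewrite Rmult_1_l; reflexivity).
  rewrite Rmult_1_l in HD1. rewrite <- HU1c.
  destruct (Rle_dec (U 1) c) as [Hle|Hgt]. auto. exfalso.
  assert (ln (1 + c) < ln (1 + U 1)) by (apply ln_increasing; lra).
  assert (ln (1 - U 1) < ln (1 - c)) by (apply ln_increasing; lra).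
  lra.
Qed.


Inductive fexpr := Cst (r : R) | At (i : nat) | Add (e1 e2 : fexpr) | Mul (e1 e2 : fexpr).

Fixpoint ev (atom : nat -> R -> R) (e : fexpr) (x : R) : R :=
  match e with
  | Cst r => r
  | At i => atom i x
  | Add e1 e2 => ev atom e1 x + ev atom e2 x
  | Mul e1 e2 => ev atom e1 x * ev atom e2 x
  end.

Fixpoint der (dat : nat -> fexpr) (e : fexpr) : fexpr :=
  match e with
  | Cst _ => Cst 0
  | At i => dat i
  | Add e1 e2 => Add (der dat e1) (der dat e2)
  | Mul e1 e2 => Add (Mul (der dat e1) e2) (Mul e1 (der dat e2))
  end.

Lemma ev_deriv atom dat (U : R -> Prop) :
  (forall i x, U x -> is_derive (atom i) x (ev atom (dat i) x)) ->
  forall e x, U x -> is_derive (ev atom e) x (ev atom (der dat e) x).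
Proof.
  intros Hat e. induction e; intros x Hx; simpl.
  - apply (is_derive_const (K:=R_AbsRing) (V:=R_NormedModule)).
  - auto.
  - apply (is_derive_plus (K:=R_AbsRing) (V:=R_NormedModule)); auto.
  - eapply is_derive_ext. intros t. reflexivity.
    replace (ev atom (der dat e1) x * ev atom e2 x + ev atom e1 x * ev atom (der dat e2) x)
      with (ev atom (der dat e1) x * ev atom e2 x + ev atom e1 x * ev atom (der dat e2) x) by ring.
    apply Derive.is_derive_mult; auto.
Qed.

Lemma ev_smooth atom dat (U : R -> Prop) :
  (forall x, U x -> locally x U) ->
  (forall i x, U x -> is_derive (atom i) x (ev atom (dat i) x)) ->
  forall e n x, U x -> ex_derive_n (ev atom e) n x.
Proof.
  intros Hop Hat.
  assert (Hn : forall n e x, U x -> Derive_n (ev atom e) n x = ev atom (Nat.iter n (der dat) e) x).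
  { induction n; intros e x Hx. reflexivity.
    simpl Derive_n. rewrite (Derive_ext_loc _ (ev atom (Nat.iter n (der dat) e))).
    - apply is_derive_unique. simpl. apply (ev_deriv atom dat U Hat). auto.
    - destruct (Hop x Hx) as [eps Heps]. exists eps. intros y Hy. apply IHn. apply Heps. auto. }
  intros e n x Hx. destruct n. simpl. auto.
  simpl. exists (ev atom (der dat (Nat.iter n (der dat) e)) x).
  apply (is_derive_ext_loc (ev atom (Nat.iter n (der dat) e))).
  - destruct (Hop x Hx) as [eps Heps]. exists eps. intros y Hy. symmetry. apply Hn. apply Heps. auto.
  - apply (ev_deriv atom dat U Hat). auto.
Qed.

Lemma in01_open x : in01 x -> locally x in01.
Proof.
  intros [H1 H2]. assert (He : 0 < Rmin x (1 - x)) by (apply Rmin_pos; lra).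
  exists (mkposreal _ He). intros y Hy. simpl in Hy. unfold ball in Hy; simpl in Hy. unfold AbsRing_ball, abs, minus, plus, opp in Hy; simpl in Hy.
  pose proof (Rmin_l x (1 - x)). pose proof (Rmin_r x (1 - x)).
  apply Rabs_lt_between in Hy. unfold in01. lra.
Qed.

Definition atomB (i : nat) (x : R) : R :=
  match i with O => x | 1%nat => sqrt (1 - x * x) | 2%nat => / sqrt (1 - x * x) | _ => / (1 + sqrt (1 - x * x)) end.
Definition datB (i : nat) : fexpr :=
  match i with O => Cst 1 | 1%nat => Mul (Cst (-1)) (Mul (At 0) (At 2))
  | 2%nat => Mul (At 0) (Mul (At 2) (Mul (At 2) (At 2)))
  | _ => Mul (At 0) (Mul (At 2) (Mul (At 3) (At 3))) end.
Definition atomG (i : nat) (x : R) : R := match i with O => x | _ => / (1 + x * x) end.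
Definition datG (i : nat) : fexpr := match i with O => Cst 1 | _ => Mul (Cst (-2)) (Mul (At 0) (Mul (At 1) (At 1))) end.

Definition bfun := ev atomB (Mul (At 0) (At 3)).
Definition gfun := ev atomG (Mul (Cst 2) (Mul (At 0) (At 1))).

Lemma atomB_deriv i x : in01 x -> is_derive (atomB i) x (ev atomB (datB i) x).
Proof.
  intros [H1 H2]. assert (Hp : 0 < 1 - x * x) by nra.
  assert (Hs : 0 < sqrt (1 - x * x)) by (apply sqrt_lt_R0; auto).
  assert (Hss : sqrt (1 - x * x) * sqrt (1 - x * x) = 1 - x * x) by (apply sqrt_sqrt; lra).
  destruct i as [|[|[|i]]]; unfold atomB; simpl.
  - auto_derive. auto. ring.
  - auto_derive; replace (1 + - (x * x)) with (1 - x * x) by ring. lra. field. lra.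
  - auto_derive; replace (1 + - (x * x)) with (1 - x * x) by ring. repeat split; lra. field; repeat split; lra.
  - auto_derive; replace (1 + - (x * x)) with (1 - x * x) by ring. repeat split; lra. field; repeat split; lra.
Qed.

Lemma atomG_deriv i x : is_derive (atomG i) x (ev atomG (datG i) x).
Proof.
  assert (0 < 1 + x * x) by nra.
  destruct i as [|i]; unfold atomG; simpl.
  - auto_derive. auto. ring.
  - auto_derive. lra. field. lra.
Qed.

Lemma bfun_smooth : smooth_on01 bfun.
Proof.
  intros n x Hx. apply (ev_smooth atomB datB in01 in01_open). intros. apply atomB_deriv; auto. auto.
Qed.

Lemma gfun_smooth : smooth_on01 gfun.
Proof.
  intros n x Hx. apply (ev_smooth atomG datG in01 in01_open). intros. apply atomG_deriv; auto. auto.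
Qed.

Lemma bfun_eq x : bfun x = x / (1 + sqrt (1 - x * x)).
Proof. reflexivity. Qed.
Lemma gfun_eq x : gfun x = 2 * x / (1 + x * x).
Proof. unfold gfun; simpl. unfold Rdiv. ring. Qed.


Lemma Cconj_R (a : R) : Cconj (RtoC a) = RtoC a.
Proof. unfold Cconj, RtoC; simpl. f_equal. ring. Qed.

Lemma M_real (a x : R) : 1 - a * x <> 0 -> M (RtoC a) (RtoC x) = RtoC ((a - x) / (1 - a * x)).
Proof.
  intros H. unfold M. rewrite Cconj_R. rewrite <- RtoC_mult, <- RtoC_minus, <- RtoC_minus.
  rewrite <- RtoC_inv by auto. rewrite <- RtoC_mult. reflexivity.
Qed.

Lemma inD_R (x : R) : Rabs x < 1 -> inD (RtoC x).
Proof. intros H. unfold inD. rewrite Cmod_R. auto. Qed.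

Lemma gfun_gt0 b : 0 < b -> 0 < gfun b.
Proof. intros. rewrite gfun_eq. apply Rdiv_lt_0_compat; nra. Qed.

Lemma gfun_lt1 b : 0 < b < 1 -> gfun b < 1.
Proof. intros. rewrite gfun_eq. apply Rmult_lt_reg_r with (1 + b * b). nra.
  unfold Rdiv. rewrite Rmult_assoc, Rinv_l by nra. nra. Qed.

Lemma Rabs_gfun b : -1 < b < 1 -> Rabs (gfun b) = gfun (Rabs b).
Proof.
  intros H. rewrite !gfun_eq. unfold Rdiv. rewrite Rabs_mult, Rabs_mult, Rabs_inv.
  rewrite (Rabs_right 2) by lra. rewrite (Rabs_right (1 + b * b)) by nra.
  rewrite <- Rabs_mult. rewrite Rabs_right with (r := b * b) by nra. auto.
Qed.

Lemma dist_ineq phi p s : AutD phi -> 0 < p < 1 -> -1 < s < 1 ->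
  phi (RtoC p) = RtoC s -> phi (RtoC (- p)) = RtoC (- s) -> Rabs (gfun s) <= gfun p.
Proof.
  intros Hphi Hp Hs H1 H2.
  assert (Hps : Cmod (RtoC p) < 1) by (rewrite Cmod_R, Rabs_right; lra).
  assert (Hss : Cmod (RtoC s) < 1) by (rewrite Cmod_R; apply Rabs_def1; lra).
  set (psi := fun z => M (RtoC s) (phi (M (RtoC p) z))).
  assert (Hpsi : AutD psi).
  { apply (AutD_comp (M (RtoC s)) (fun z => phi (M (RtoC p) z))). apply AutD_M; auto.
    apply AutD_comp. auto. apply AutD_M; auto. }
  assert (H0 : psi 0%C = 0%C) by (unfold psi; rewrite M_0, H1; apply M_self).
  set (c := gfun p).
  assert (Hc : 0 < c < 1) by (split; [apply gfun_gt0 | apply gfun_lt1]; lra).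
  assert (HS := schwarz_aut psi c Hpsi H0 Hc).
  assert (E1 : M (RtoC p) (RtoC c) = RtoC (- p)).
  { rewrite M_real. f_equal. unfold c. rewrite gfun_eq. field. split; nra.
    unfold c. rewrite gfun_eq. intros HH. field_simplify in HH. 2: nra.
    assert (1 - p * p = 0) by (apply Rmult_eq_reg_r with (/(1 + p*p)); [ | apply Rinv_neq_0_compat; nra]; 
      rewrite Rmult_0_l; rewrite <- HH; field; nra). nra. }
  assert (E2 : psi (RtoC c) = RtoC (gfun s)).
  { unfold psi. rewrite E1, H2. rewrite M_real. f_equal. rewrite gfun_eq. field. nra. nra. }
  rewrite E2, Cmod_R in HS. auto.
Qed.

Lemma Cmult_eq0 (x y : C) : (x * y)%C = 0%C -> x = 0%C \/ y = 0%C.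
Proof.
  intros H. assert (Cmod x * Cmod y = 0) by (rewrite <- Cmod_mult, H; apply Cmod_0).
  apply Rmult_integral in H0. destruct H0; [left|right]; apply Cmod_eq_0; auto.
Qed.

Lemma rep_sym (z1 z2 : C) (b : R) : (z1 + z2)%C = RtoC 0 -> (z1 * z2)%C = (- (RtoC b * RtoC b))%C ->
  (z1 = RtoC b /\ z2 = RtoC (- b)) \/ (z1 = RtoC (- b) /\ z2 = RtoC b).
Proof.
  intros H1 H2.
  assert (E : z2 = (- z1)%C) by (replace z2 with ((z1 + z2) - z1)%C by ring; rewrite H1; ring).
  subst z2.
  assert (H3 : ((z1 - RtoC b) * (z1 + RtoC b))%C = 0%C).
  { replace ((z1 - RtoC b) * (z1 + RtoC b))%C with (- (z1 * - z1 + RtoC b * RtoC b))%C by ring.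
    rewrite H2. ring. }
  apply Cmult_eq0 in H3. rewrite !RtoC_opp. destruct H3 as [H3|H3].
  - left. assert (z1 = RtoC b) by (replace z1 with ((z1 - RtoC b) + RtoC b)%C by ring; rewrite H3; ring).
    subst. split; auto.
  - right. assert (z1 = (- RtoC b)%C) by (replace z1 with ((z1 + RtoC b) - RtoC b)%C by ring; rewrite H3; ring).
    subst. split; auto. ring.
Qed.

Lemma rep_a (z1 z2 : C) (a : R) : (z1 + z2)%C = RtoC a -> (z1 * z2)%C = RtoC 0 ->
  (z1 = RtoC a /\ z2 = RtoC 0) \/ (z1 = RtoC 0 /\ z2 = RtoC a).
Proof.
  intros H1 H2. apply Cmult_eq0 in H2. destruct H2 as [H2|H2]; subst.
  - right. split; auto. rewrite <- H1. ring.
  - left. split; auto. rewrite <- H1. ring.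
Qed.

Definition Xb (b : R) : C * C := (RtoC 0, (- (RtoC b * RtoC b))%C).
Definition Ya (a : R) : C * C := (RtoC a, RtoC 0).

Lemma orbit_le b b' : in01 b -> in01 b' -> orbit (Xb b') (Xb b) -> gfun b <= gfun b'.
Proof.
  intros Hb Hb' [phi [Hphi [z1 [z2 [Hz1 [Hz2 [Hx Hy]]]]]]].
  unfold Xb in Hx, Hy.
  assert (Hx1 := f_equal fst Hx). assert (Hx2 := f_equal snd Hx).
  assert (Hy1 := f_equal fst Hy). assert (Hy2 := f_equal snd Hy). simpl in Hx1, Hx2, Hy1, Hy2.
  destruct (rep_sym z1 z2 b' (eq_sym Hx1) (eq_sym Hx2)) as [[-> ->]|[-> ->]];
  destruct (rep_sym _ _ b (eq_sym Hy1) (eq_sym Hy2)) as [[E1 E2]|[E1 E2]];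
  destruct Hb as [Hb1 Hb2]; destruct Hb' as [Hb1' Hb2'].
  - assert (H := dist_ineq phi b' b Hphi ltac:(lra) ltac:(lra) E1 E2). rewrite Rabs_right in H. auto.
    left. apply gfun_gt0. lra.
  - assert (H := dist_ineq phi b' (- b) Hphi ltac:(lra) ltac:(lra) E1 ltac:(rewrite Ropp_involutive; auto)).
    rewrite Rabs_gfun, Rabs_Ropp, Rabs_right in H by lra. auto.
  - assert (H := dist_ineq phi b' (- b) Hphi ltac:(lra) ltac:(lra) E2 ltac:(rewrite Ropp_involutive; auto)).
    rewrite Rabs_gfun, Rabs_Ropp, Rabs_right in H by lra. auto.
  - assert (H := dist_ineq phi b' b Hphi ltac:(lra) ltac:(lra) E2 E1). rewrite Rabs_right in H. auto.
    left. apply gfun_gt0. lra.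
Qed.

Lemma orbit_refl b : in01 b -> orbit (Xb b) (Xb b).
Proof.
  intros [H1 H2]. exists (fun z => z). split. apply AutD_id.
  exists (RtoC b), (RtoC (- b)). split. apply inD_R. rewrite Rabs_right; lra.
  split. apply inD_R. rewrite Rabs_Ropp, Rabs_right; lra.
  unfold Xb. rewrite RtoC_opp. split; f_equal; ring.
Qed.

Lemma exist_orbit b : in01 b -> same_orbit (Ya (gfun b)) (Xb b).
Proof.
  intros [Hb1 Hb2]. set (a := gfun b).
  assert (Ha : 0 < a < 1) by (split; [apply gfun_gt0 | apply gfun_lt1]; lra).
  assert (HbD : Cmod (RtoC b) < 1) by (rewrite Cmod_R, Rabs_right; lra).
  set (m := M (RtoC b)).
  assert (Hm : AutD m) by (apply AutD_M; auto).
  assert (m1 : m (RtoC (- b)) = RtoC a).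
  { unfold m. rewrite M_real by nra. f_equal. unfold a. rewrite gfun_eq. field. nra. }
  assert (m2 : m (RtoC b) = RtoC 0) by (unfold m; apply M_self).
  assert (m3 : m (RtoC 0) = RtoC b) by (unfold m; apply M_0).
  assert (m4 : m (RtoC a) = RtoC (- b)).
  { rewrite <- m1. unfold m. apply M_invol. auto. rewrite Cmod_R, Rabs_Ropp, Rabs_right; lra. }
  assert (D0 : inD (RtoC 0)) by (apply inD_R; rewrite Rabs_R0; lra).
  assert (Da : inD (RtoC a)) by (apply inD_R; rewrite Rabs_right; lra).
  assert (Db : inD (RtoC b)) by (apply inD_R; rewrite Rabs_right; lra).
  assert (Dmb : inD (RtoC (- b))) by (apply inD_R; rewrite Rabs_Ropp, Rabs_right; lra).
  intros y. split.
  - intros [phi [Hphi [z1 [z2 [Hz1 [Hz2 [Hx Hy]]]]]]].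
    unfold Ya in Hx. assert (Hx1 := f_equal fst Hx). assert (Hx2 := f_equal snd Hx). simpl in Hx1, Hx2.
    exists (fun z => phi (m z)). split. apply AutD_comp; auto.
    destruct (rep_a z1 z2 a (eq_sym Hx1) (eq_sym Hx2)) as [[-> ->]|[-> ->]].
    + exists (RtoC (- b)), (RtoC b). split. auto. split. auto. split.
      unfold Xb. rewrite RtoC_opp. f_equal; ring. rewrite m1, m2. auto.
    + exists (RtoC b), (RtoC (- b)). split. auto. split. auto. split.
      unfold Xb. rewrite RtoC_opp. f_equal; ring. rewrite m1, m2. auto.
  - intros [phi [Hphi [z1 [z2 [Hz1 [Hz2 [Hx Hy]]]]]]].
    unfold Xb in Hx. assert (Hx1 := f_equal fst Hx). assert (Hx2 := f_equal snd Hx). simpl in Hx1, Hx2.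
    destruct (AutD_inv m Hm) as [mi [Hmi [Hmi1 Hmi2]]].
    exists (fun z => phi (m z)). split. apply AutD_comp; auto.
    destruct (rep_sym z1 z2 b (eq_sym Hx1) (eq_sym Hx2)) as [[-> ->]|[-> ->]].
    + exists (RtoC 0), (RtoC a). split. auto. split. auto. split.
      unfold Ya. f_equal; ring. rewrite m3, m4. auto.
    + exists (RtoC a), (RtoC 0). split. auto. split. auto. split.
      unfold Ya. f_equal; ring. rewrite m3, m4. auto.
Qed.

Lemma sqrt_1mx (x : R) : in01 x -> 0 < sqrt (1 - x * x) < 1 /\ sqrt (1 - x * x) * sqrt (1 - x * x) = 1 - x * x.
Proof.
  intros [H1 H2]. assert (Hss : sqrt (1 - x * x) * sqrt (1 - x * x) = 1 - x * x) by (apply sqrt_sqrt; nra).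
  assert (0 < sqrt (1 - x * x)) by (apply sqrt_lt_R0; nra).
  repeat split; nra.
Qed.

Lemma bfun_in01 a : in01 a -> in01 (bfun a).
Proof.
  intros Ha. destruct (sqrt_1mx a Ha) as [[S1 S2] S3]. destruct Ha as [H1 H2].
  rewrite bfun_eq. split. apply Rdiv_lt_0_compat; lra.
  apply Rmult_lt_reg_r with (1 + sqrt (1 - a * a)). lra. unfold Rdiv. rewrite Rmult_assoc, Rinv_l by lra. lra.
Qed.

Lemma gfun_in01 b : in01 b -> in01 (gfun b).
Proof. intros Hb. split. apply gfun_gt0. apply Hb. apply gfun_lt1. apply Hb. Qed.

Lemma gfun_bfun a : in01 a -> gfun (bfun a) = a.
Proof.
  intros Ha. destruct (sqrt_1mx a Ha) as [[S1 S2] S3]. destruct Ha as [H1 H2].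
  rewrite gfun_eq, bfun_eq. set (s := sqrt (1 - a * a)) in *.
  assert (E : 1 + a / (1 + s) * (a / (1 + s)) = 2 / (1 + s)).
  { assert (Hs1 : 1 + s <> 0) by lra.
    replace (1 + a / (1 + s) * (a / (1 + s))) with (((1 + s) * (1 + s) + a * a) / ((1 + s) * (1 + s))) by (field; auto).
    replace (a * a) with (1 - s * s) by lra. field. auto. }
  rewrite E. field. lra.
Qed.

Lemma bfun_gfun b : in01 b -> bfun (gfun b) = b.
Proof.
  intros [H1 H2]. rewrite gfun_eq, bfun_eq.
  assert (E : 1 - 2 * b / (1 + b * b) * (2 * b / (1 + b * b)) = ((1 - b * b) / (1 + b * b)) * ((1 - b * b) / (1 + b * b))).
  { field. nra. }
  rewrite E. rewrite sqrt_square. field. split; nra. apply Rdiv_le_0_compat || (left; apply Rdiv_lt_0_compat); nra.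
Qed.

Lemma gfun_inj b b' : in01 b -> in01 b' -> gfun b = gfun b' -> b = b'.
Proof.
  intros [H1 H2] [H1' H2'] H. rewrite !gfun_eq in H.
  assert (2 * b * (1 + b' * b') = 2 * b' * (1 + b * b)).
  { apply (f_equal (fun t => t * (1 + b * b) * (1 + b' * b'))) in H. field_simplify in H; nra. }
  assert ((b - b') * (1 - b * b') = 0) by nra.
  apply Rmult_integral in H3. destruct H3; nra.
Qed.

Theorem lemma2p9 :
  (forall a : R, in01 a ->
     exists! b : R, in01 b /\
       same_orbit (RtoC a, RtoC 0) (RtoC 0, (- (RtoC b * RtoC b))%C)) /\
  (exists f : R -> R,
     (forall a : R, in01 a -> in01 (f a) /\
        same_orbit (RtoC a, RtoC 0) (RtoC 0, (- (RtoC (f a) * RtoC (f a)))%C)) /\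
     diffeo01 f).
Proof.
  assert (Hex : forall a, in01 a -> same_orbit (RtoC a, RtoC 0) (RtoC 0, (- (RtoC (bfun a) * RtoC (bfun a)))%C)).
  { intros a Ha. pose proof (exist_orbit (bfun a) (bfun_in01 a Ha)). rewrite gfun_bfun in H by auto. exact H. }
  split.
  - intros a Ha. exists (bfun a). split. split. apply bfun_in01; auto. apply Hex; auto.
    intros b' [Hb' Hs]. set (b := bfun a).
    assert (Hb : in01 b) by (apply bfun_in01; auto).
    assert (S1 := Hex a Ha). fold b in S1.
    assert (O1 : orbit (Xb b') (Xb b)).
    { apply Hs. apply S1. apply orbit_refl. auto. }
    assert (O2 : orbit (Xb b) (Xb b')).
    { apply S1. apply Hs. apply orbit_refl. auto. }
    apply gfun_inj; auto. apply Rle_antisym; apply orbit_le; auto.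
  - exists bfun. split.
    + intros a Ha. split. apply bfun_in01; auto. apply Hex; auto.
    + split. intros; apply bfun_in01; auto. split. apply bfun_smooth.
      exists gfun. split. intros; apply gfun_in01; auto. split. apply gfun_smooth.
      split; intros; [apply gfun_bfun | apply bfun_gfun]; auto.
Qed.
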